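(* There exists a function $\chi_{\ge1}\in C^\infty([0,\infty))$ such that $\chi_{\ge1}(x)=0$ for $x\le1$, $\chi_{\ge1}(x)=1$ for $x\ge2$, and $$\int_0^\infty\frac{\chi_{\ge1}(x)}{x^3}dx=\int_0^\infty x^3(1-\chi_{\ge1}(x))dx=\int_0^\infty x^3\log(x)(1-\chi_{\ge1}(x))dx=0.$$ Moreover, for any such function, for every $k\ge0$ there is $C_k>0$ (and there is $C>0$) such that the Hankel transform of order 1 of $x\mapsto\chi_{\ge1}(x)/x^5$ satisfies $$\Big|\widehat{\tfrac{\chi_{\ge1}(\cdot)}{(\cdot)^5}}(\eta)\Big|\le\begin{cases}C\eta^3\langle\log(\eta)\rangle, & \eta<1,\\ \dfrac{C_k}{\eta^k}, & \eta\ge1.\end{cases}$$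
   Context: The Hankel transform of order 1 is $\widehat f(\xi)=\int_0^\infty J_1(r\xi)f(r)\,r\,dr$, where $J_1$ is the Bessel function of order 1; $\langle x\rangle=\sqrt{1+x^2}$. *)

(* Defs.v *)
From Stdlib Require Import Reals.
From Coquelicot Require Import Coquelicot.
Open Scope R_scope.

Definition J1 (x : R) : R :=
  (x / 2) * Series (fun m => (-1) ^ m / (INR (Factorial.fact m) * INR (Factorial.fact (S m))) * (x / 2) ^ (2 * m)).

Definition jbr (x : R) : R := sqrt (1 + x ^ 2).

Definition is_int_0_inf (f : R -> R) (l : R) : Prop :=
  is_RInt_gen f (at_point 0) (Rbar_locally p_infty) l.
Definition ex_int_0_inf (f : R -> R) : Prop :=
  ex_RInt_gen f (at_point 0) (Rbar_locally p_infty).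

Definition hankel1 (f : R -> R) (xi : R) : R :=
  RInt_gen (fun r => J1 (r * xi) * f r * r) (at_point 0) (Rbar_locally p_infty).

(* The admissible cutoffs chi_{>=1}: a function on [0,oo) (values on x<0 are
   irrelevant), C^oo on (0,oo), zero on [0,1] (hence C^oo on [0,oo)),
   equal to 1 on [2,oo), with the three vanishing moment conditions. *)
Definition admissible_cutoff (chi : R -> R) : Prop :=
  (forall (n : nat) (x : R), 0 < x -> ex_derive_n chi n x) /\
  (forall x, 0 <= x <= 1 -> chi x = 0) /\
  (forall x, 2 <= x -> chi x = 1) /\
  is_int_0_inf (fun x => chi x / x ^ 3) 0 /\
  is_int_0_inf (fun x => x ^ 3 * (1 - chi x)) 0 /\
  is_int_0_inf (fun x => x ^ 3 * ln x * (1 - chi x)) 0.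

(* Main.v *)
Require Import Defs.
From Stdlib Require Import Reals Lra Lia Psatz.
From Coquelicot Require Import Coquelicot.
Open Scope R_scope.

Definition acoef (m : nat) : R := (-1) ^ m / (INR (Factorial.fact m) * INR (Factorial.fact (S m))).
Definition bcoef (m : nat) : R := (-1) ^ m / (INR (Factorial.fact m) * INR (Factorial.fact m)).
Definition Aser (z : R) := PSeries acoef z.
Definition Bser (z : R) := PSeries bcoef z.
Definition J0 (x : R) := Bser ((x/2)^2).

Lemma fact_pos n : 0 < INR (Factorial.fact n).
Proof. apply lt_0_INR. apply Factorial.lt_O_fact. Qed.

Lemma J1_A x : J1 x = x/2 * Aser ((x/2)^2).
Proof.
  unfold J1, Aser, PSeries. apply Rmult_eq_compat_l. apply Series_ext. intro n.
  rewrite pow_mult. reflexivity.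
Qed.

Lemma fact_S n : INR (Factorial.fact (S n)) = INR (S n) * INR (Factorial.fact n).
Proof. change (Factorial.fact (S n)) with (S n * Factorial.fact n)%nat. apply mult_INR. Qed.

Lemma CVa : CV_radius acoef = p_infty.
Proof.
  apply CV_radius_infinite_DAlembert.
  - intro n. unfold acoef. pose proof (fact_pos n). pose proof (fact_pos (S n)).
    apply Rmult_integral_contrapositive_currified.
    apply pow_nonzero. lra. apply Rinv_neq_0_compat. nra.
  - apply is_lim_seq_ext with (fun n => / (INR (S n) * INR (S (S n)))).
    + intro n. unfold acoef. rewrite (fact_S (S n)). rewrite (fact_S n).
      pose proof (fact_pos n). pose proof (pos_INR n).
      rewrite !S_INR. simpl pow.
      replace ((-1) * (-1) ^ n / ((INR n + 1) * INR (Factorial.fact n) *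
        ((INR n + 1 + 1) * ((INR n + 1) * INR (Factorial.fact n)))) /
        ((-1) ^ n / (INR (Factorial.fact n) * ((INR n + 1) * INR (Factorial.fact n)))))
      with (- / ((INR n + 1) * (INR n + 1 + 1))).
      * rewrite Rabs_Ropp, Rabs_pos_eq. reflexivity.
        apply Rlt_le, Rinv_0_lt_compat. nra.
      * field. repeat split; try lra. apply pow_nonzero; lra.
    + apply is_lim_seq_le_le with (fun _ => 0) (fun n => / INR (S n)).
      * intro n. pose proof (pos_INR n). rewrite !S_INR. split.
        apply Rlt_le, Rinv_0_lt_compat. nra.
        apply Rinv_le_contravar. lra. nra.
      * apply is_lim_seq_const.
      * replace (Finite 0) with (Rbar_inv p_infty) by reflexivity.
        apply is_lim_seq_inv. 2: discriminate.
        apply (is_lim_seq_incr_1 INR p_infty). apply is_lim_seq_INR.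
Qed.

Lemma PSd_b n : PS_derive bcoef n = - acoef n.
Proof.
  unfold PS_derive, bcoef, acoef. rewrite (fact_S n).
  pose proof (fact_pos n). pose proof (pos_INR n). rewrite S_INR. simpl pow.
  field. split. lra. nra.
Qed.

Lemma PSd_a n : PS_derive (PS_incr_1 acoef) n = bcoef n.
Proof.
  unfold PS_derive. change (PS_incr_1 acoef (S n)) with (acoef n).
  unfold bcoef, acoef. rewrite (fact_S n).
  pose proof (fact_pos n). pose proof (pos_INR n). rewrite S_INR.
  field. split. lra. nra.
Qed.

Lemma CVb : CV_radius bcoef = p_infty.
Proof.
  rewrite <- (CV_radius_ext _ _ PSd_a). rewrite CV_radius_derive, CV_radius_incr_1. apply CVa.
Qed.

Lemma inrad a x : CV_radius a = p_infty -> Rbar_lt (Rabs x) (CV_radius a).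
Proof. intro H; rewrite H; exact I. Qed.

Lemma is_derive_B z : is_derive Bser z (- Aser z).
Proof.
  unfold Bser. replace (- Aser z) with (PSeries (PS_derive bcoef) z).
  apply is_derive_PSeries, inrad, CVb.
  unfold Aser. rewrite <- PSeries_opp. apply PSeries_ext. intro n. rewrite PSd_b. reflexivity.
Qed.

Lemma is_derive_zA z : is_derive (fun z => z * Aser z) z (Bser z).
Proof.
  apply is_derive_ext with (PSeries (PS_incr_1 acoef)).
  intro t. unfold Aser. apply PSeries_incr_1.
  replace (Bser z) with (PSeries (PS_derive (PS_incr_1 acoef)) z).
  apply is_derive_PSeries. apply inrad. rewrite CV_radius_incr_1. apply CVa.
  unfold Bser. apply PSeries_ext. exact PSd_a.
Qed.

Lemma is_derive_A z : is_derive Aser z (PSeries (PS_derive acoef) z).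
Proof. apply is_derive_PSeries, inrad, CVa. Qed.

Lemma is_derive_sq x : is_derive (fun x => (x/2)^2) x (x/2).
Proof. auto_derive; auto. field. Qed.

Lemma is_derive_J0 x : is_derive J0 x (- J1 x).
Proof.
  unfold J0. rewrite J1_A.
  replace (- (x / 2 * Aser ((x / 2) ^ 2))) with (scal (x/2) (- Aser ((x/2)^2))).
  apply (is_derive_comp Bser (fun x => (x/2)^2)). apply is_derive_B. apply is_derive_sq.
  unfold scal; simpl; unfold mult; simpl. ring.
Qed.

Lemma xJ1_aux (t : R) : 2 * ((t/2)^2 * Aser ((t/2)^2)) = t * J1 t.
Proof. rewrite J1_A. field. Qed.

Lemma is_derive_xJ1 x : is_derive (fun x => x * J1 x) x (x * J0 x).
Proof.
  apply is_derive_ext with (fun x => 2 * ((fun z => z * Aser z) ((x/2)^2))).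
  intro t. apply xJ1_aux.
  replace (x * J0 x) with (2 * scal (x/2) (Bser ((x/2)^2))).
  apply is_derive_scal. apply (is_derive_comp (fun z => z * Aser z) (fun x => (x/2)^2)). apply is_derive_zA. apply is_derive_sq.
  unfold J0, scal; simpl; unfold mult; simpl. field.
Qed.

Lemma ex_derive_J1 x : ex_derive J1 x.
Proof.
  apply ex_derive_ext with (fun x => x/2 * Aser ((x/2)^2)).
  intro t. rewrite J1_A. reflexivity.
  apply ex_derive_mult. auto_derive. auto.
  eexists. apply (is_derive_comp Aser (fun x => (x/2)^2)). apply is_derive_A. apply is_derive_sq.
Qed.

Lemma is_derive_J1 x : x <> 0 -> is_derive J1 x (J0 x - J1 x / x).
Proof.
  intro Hx.
  pose proof (Derive_correct _ _ (ex_derive_J1 x)) as H.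
  set (d := Derive J1 x) in *.
  assert (H2 : is_derive (fun x => x * J1 x) x (1 * J1 x + x * d)).
  { assert (Hid : is_derive (fun x : R => x) x 1) by (auto_derive; auto).
    apply (is_derive_mult (fun x => x) J1 x 1 d). exact Hid. exact H.
    intros; apply Rmult_comm. }
  pose proof (is_derive_unique _ _ _ H2) as E1.
  rewrite (is_derive_unique _ _ _ (is_derive_xJ1 x)) in E1.
  replace (J0 x - J1 x / x) with d. exact H.
  field_simplify_eq; auto. lra.
Qed.

Lemma ex_derive_J0 x : ex_derive J0 x.
Proof. eexists; apply is_derive_J0. Qed.

Lemma cont_J0 x : continuous J0 x.
Proof. apply (ex_derive_continuous (K := R_AbsRing) (V := R_NormedModule)), ex_derive_J0. Qed.
Lemma cont_J1 x : continuous J1 x.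
Proof. apply (ex_derive_continuous (K := R_AbsRing) (V := R_NormedModule)), ex_derive_J1. Qed.

Lemma J0_0 : J0 0 = 1.
Proof.
  unfold J0, Bser. replace ((0/2)^2) with 0 by field. rewrite PSeries_0.
  unfold bcoef. simpl. field.
Qed.
Lemma J1_0 : J1 0 = 0.
Proof. rewrite J1_A. field. Qed.

Lemma energy x : 0 <= x -> J0 x ^ 2 + J1 x ^ 2 <= 1.
Proof.
  intro Hx. destruct (Req_dec x 0) as [->|Hx0].
  { rewrite J0_0, J1_0. lra. }
  set (E := fun x => J0 x ^ 2 + J1 x ^ 2).
  destruct (MVT_gen E 0 x (fun t => - 2 * J1 t ^ 2 / t)) as [c [Hc Ec]].
  - intros t Ht. rewrite Rmin_left in Ht by lra. rewrite Rmax_right in Ht by lra.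
    unfold E. 
    replace (- 2 * J1 t ^ 2 / t) with (INR 2 * (- J1 t) * J0 t ^ Init.Nat.pred 2 + INR 2 * (J0 t - J1 t / t) * J1 t ^ Init.Nat.pred 2).
    2:{ simpl. field. lra. }
    apply (is_derive_plus (fun t => J0 t ^ 2) (fun t => J1 t ^ 2)).
    + apply (is_derive_pow J0 2 t (- J1 t)). apply is_derive_J0.
    + apply (is_derive_pow J1 2 t). apply is_derive_J1. lra.
  - intros t _. apply continuity_pt_filterlim. unfold E.
    apply (continuous_plus (fun t => J0 t ^ 2) (fun t => J1 t ^ 2)).
    + apply (continuous_mult J0 (fun t => J0 t ^ 1)). apply cont_J0.
      apply (continuous_mult J0 (fun t => J0 t ^ 0)). apply cont_J0. apply continuous_const.
    + apply (continuous_mult J1 (fun t => J1 t ^ 1)). apply cont_J1.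
      apply (continuous_mult J1 (fun t => J1 t ^ 0)). apply cont_J1. apply continuous_const.
  - rewrite Rmin_left in Hc by lra. rewrite Rmax_right in Hc by lra.
    unfold E in Ec. rewrite J0_0, J1_0 in Ec.
    destruct (Req_dec c 0) as [->|Hc0].
    + unfold Rdiv in Ec. rewrite Rinv_0 in Ec. lra.
    + assert (0 <= J1 c ^ 2 / c). { apply Rdiv_le_0_compat. nra. lra. }
      assert (- 2 * J1 c ^ 2 / c * (x - 0) <= 0).
      { replace (- 2 * J1 c ^ 2 / c * (x - 0)) with (-(2 * x * (J1 c ^ 2 / c))) by (field; lra).
        assert (0 <= 2 * x * (J1 c ^ 2 / c)). apply Rmult_le_pos; lra. lra. }
      unfold E. lra.
Qed.

Lemma J0_bnd x : 0 <= x -> Rabs (J0 x) <= 1.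
Proof.
  intro H. pose proof (energy x H). apply Rsqr_incr_0_var. rewrite <- Rsqr_abs. unfold Rsqr. nra. lra.
Qed.
Lemma J1_bnd x : 0 <= x -> Rabs (J1 x) <= 1.
Proof.
  intro H. pose proof (energy x H). apply Rsqr_incr_0_var. rewrite <- Rsqr_abs. unfold Rsqr. nra. lra.
Qed.

Lemma cont_bound (f : R -> R) a b : a <= b -> (forall c, a <= c <= b -> continuous f c) ->
  exists M, 0 <= M /\ forall c, a <= c <= b -> Rabs (f c) <= M.
Proof.
  intros Hab Hc.
  assert (Hc' : forall c, a <= c <= b -> continuity_pt f c).
  { intros c H. apply continuity_pt_filterlim. apply Hc. exact H. }
  destruct (continuity_ab_maj f a b Hab Hc') as [x1 [H1 _]].
  destruct (continuity_ab_min f a b Hab Hc') as [x2 [H2 _]].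
  exists (Rmax (Rabs (f x1)) (Rabs (f x2))). split.
  apply Rle_trans with (Rabs (f x1)). apply Rabs_pos. apply Rmax_l.
  intros c Hc0. specialize (H1 c Hc0). specialize (H2 c Hc0).
  apply Rabs_le. split.
  - apply Rle_trans with (f x2); auto.
    apply Rle_trans with (- Rabs (f x2)). apply Ropp_le_contravar, Rmax_r.
    pose proof (Rle_abs (- f x2)) as Hq. rewrite Rabs_Ropp in Hq. lra.
  - apply Rle_trans with (f x1); auto.
    apply Rle_trans with (Rabs (f x1)). apply Rle_abs. apply Rmax_l.
Qed.

Lemma acoef0 : acoef 0 = 1.
Proof. unfold acoef. simpl. field. Qed.

Lemma J1_small : exists M, 0 <= M /\ forall x, 0 <= x <= 1 -> Rabs (J1 x - x/2) <= M * x^3.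
Proof.
  set (P := PSeries (PS_decr_1 acoef)).
  destruct (cont_bound P 0 (1/4)) as [M [HM0 HM]]. lra.
  { intros c _. apply (ex_derive_continuous (K := R_AbsRing) (V := R_NormedModule)).
    apply ex_derive_PSeries. apply inrad. rewrite CV_radius_decr_1. apply CVa. }
  exists (M/8). split. lra. intros x Hx.
  rewrite J1_A. unfold Aser. rewrite PSeries_decr_1. 2:{ apply CV_radius_inside, inrad, CVa. }
  rewrite acoef0. fold P.
  replace (x / 2 * (1 + (x / 2) ^ 2 * P ((x / 2) ^ 2)) - x / 2) with (x^3 / 8 * P ((x/2)^2)) by field.
  rewrite Rabs_mult. rewrite (Rabs_pos_eq (x^3/8)). 2:{ assert (0 <= x^3) by (apply pow_le; lra). lra. }
  assert (Hb : Rabs (P ((x/2)^2)) <= M). { apply HM. split. nra. nra. }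
  assert (0 <= x^3) by (apply pow_le; lra). nra.
Qed.

Lemma J1_diff_bound : exists K, 0 < K /\ forall x, 0 <= x -> Rabs (J1 x - x/2) <= K * (x^3 / (1 + x^2)).
Proof.
  destruct J1_small as [M [HM0 HM]].
  exists (2 * M + 3). split. lra. intros x Hx.
  assert (Hd : 0 < 1 + x^2) by nra.
  destruct (Rle_lt_dec x 1) as [H1|H1].
  - eapply Rle_trans. apply HM. lra.
    assert (0 <= x^3) by (apply pow_le; lra).
    assert (x^3 <= 2 * (x^3 / (1 + x^2))).
    { assert (E : x^3 / (1 + x^2) * (1 + x^2) = x^3) by (field; lra).
      apply Rmult_le_reg_r with (1 + x^2). lra. rewrite Rmult_assoc, E. assert (x^2 <= 1) by nra. assert (x^3 * x^2 <= x^3 * 1) by (apply Rmult_le_compat_l; lra). nra. }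
    assert (0 <= x^3 / (1 + x^2)) by (apply Rdiv_le_0_compat; lra). nra.
  - eapply Rle_trans. apply Rabs_triang. rewrite Rabs_Ropp.
    pose proof (J1_bnd x Hx). rewrite (Rabs_pos_eq (x/2)) by lra.
    assert (x / 2 <= x^3 / (1 + x^2)).
    { assert (E : x^3 / (1 + x^2) * (1 + x^2) = x^3) by (field; lra).
      apply Rmult_le_reg_r with (1 + x^2). lra. rewrite E. nra. }
    assert (0 <= x^3 / (1 + x^2)) by (apply Rdiv_le_0_compat; [apply pow_le|]; lra). nra.
Qed.

Ltac Rring := match goal with |- ?a = ?b => change (@eq R a b); ring end.
Ltac Rfield := match goal with |- ?a = ?b => change (@eq R a b); field end.

Lemma ballR (x e y : R) : Rabs (y - x) < e -> ball x e y.
Proof. intro H. exact H. Qed.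
Lemma ballR' (x e y : R) : ball x e y -> Rabs (y - x) < e.
Proof. intro H. exact H. Qed.

Lemma cmul (f g : R -> R) x : continuous f x -> continuous g x -> continuous (fun y => f y * g y) x.
Proof. intros; apply (continuous_mult f g); auto. Qed.
Lemma cplus (f g : R -> R) x : continuous f x -> continuous g x -> continuous (fun y => f y + g y) x.
Proof. intros; apply (continuous_plus f g); auto. Qed.
Lemma cminus (f g : R -> R) x : continuous f x -> continuous g x -> continuous (fun y => f y - g y) x.
Proof. intros; apply (continuous_plus f (fun y => - g y)); auto. apply (continuous_opp g); auto. Qed.
Lemma cconst (c : R) x : continuous (fun _ : R => c) x.
Proof. apply continuous_const. Qed.
Lemma cid x : continuous (fun y : R => y) x.
Proof. apply continuous_id. Qed.
Lemma cabs (f : R -> R) x : continuous f x -> continuous (fun y => Rabs (f y)) x.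
Proof. intro H. apply (continuous_comp f Rabs). auto. apply continuous_Rabs. Qed.
Lemma cinv (f : R -> R) x : continuous f x -> f x <> 0 -> continuous (fun y => / f y) x.
Proof. intros. apply continuous_Rinv_comp; auto. Qed.
Lemma cder (f : R -> R) x : ex_derive f x -> continuous f x.
Proof. apply (ex_derive_continuous (K := R_AbsRing) (V := R_NormedModule)). Qed.
Lemma cpow (f : R -> R) n x : continuous f x -> continuous (fun y => f y ^ n) x.
Proof. intro H. induction n. simpl. apply cconst. simpl. apply cmul; auto. Qed.
Lemma cdiv (f g : R -> R) x : continuous f x -> continuous g x -> g x <> 0 -> continuous (fun y => f y / g y) x.
Proof. intros. apply cmul; auto. apply cinv; auto. Qed.

Lemma exR (f : R -> R) a b : (forall z, Rmin a b <= z <= Rmax a b -> continuous f z) -> ex_RInt f a b.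
Proof. apply (ex_RInt_continuous (V := R_CompleteNormedModule)). Qed.

Lemma chasR (f : R -> R) a b c : ex_RInt f a b -> ex_RInt f b c -> RInt f a b + RInt f b c = RInt f a c.
Proof. intros. apply (RInt_Chasles (V := R_CompleteNormedModule)); auto. Qed.
Lemma swapR (f : R -> R) a b : ex_RInt f a b -> RInt f b a = - RInt f a b.
Proof. intros. rewrite <- (opp_RInt_swap (V := R_CompleteNormedModule)); auto. Qed.

Lemma RInt_abs_bound (h w : R -> R) a b : a <= b ->
  (forall r, a <= r <= b -> continuous h r) -> (forall r, a <= r <= b -> continuous w r) ->
  (forall r, a < r < b -> Rabs (h r) <= w r) -> Rabs (RInt h a b) <= RInt w a b.
Proof.
  intros Hab Hh Hw Hb.
  eapply Rle_trans. apply abs_RInt_le. auto.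
  apply exR. intros z Hz. rewrite Rmin_left in Hz by lra. rewrite Rmax_right in Hz by lra. auto.
  apply RInt_le. auto.
  apply exR. intros z Hz. rewrite Rmin_left in Hz by lra. rewrite Rmax_right in Hz by lra. apply cabs; auto.
  apply exR. intros z Hz. rewrite Rmin_left in Hz by lra. rewrite Rmax_right in Hz by lra. auto.
  auto.
Qed.

Lemma RInt_inv2 C u v : 0 < u -> 0 < v -> RInt (fun r => C / r^2) u v = C / u - C / v.
Proof.
  intros Hu Hv. apply is_RInt_unique.
  replace (C / u - C / v) with (minus ((fun r => - C / r) v) ((fun r => - C / r) u)).
  2:{ unfold minus, plus, opp; simpl. field. lra. }
  apply (is_RInt_derive (V := R_CompleteNormedModule) (fun r => - C / r)).
  - intros x Hx. assert (0 < x). { destruct (Rle_lt_dec u v); [rewrite Rmin_left in Hx|rewrite Rmin_right in Hx]; lra. }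
    auto_derive. lra. field. lra.
  - intros x Hx. assert (0 < x). { destruct (Rle_lt_dec u v); [rewrite Rmin_left in Hx|rewrite Rmin_right in Hx]; lra. }
    apply cdiv. apply cconst. apply cpow, cid. apply pow_nonzero; lra.
Qed.

Lemma tail_bound (h : R -> R) C u v : 1 <= u <= v ->
  (forall r, 0 < r -> continuous h r) ->
  (forall r, 1 <= r -> Rabs (h r) <= C / r^2) ->
  Rabs (RInt h u v) <= C / u - C / v.
Proof.
  intros Huv Hc Hb. rewrite <- RInt_inv2 by lra.
  apply RInt_abs_bound. lra. intros; apply Hc; lra.
  intros r Hr. apply cdiv. apply cconst. apply cpow, cid. apply pow_nonzero; lra.
  intros r Hr. apply Hb. lra.
Qed.

Lemma int_conv (h : R -> R) (C : R) :
  (forall r, 0 < r -> continuous h r) ->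
  (forall r, 1 <= r -> Rabs (h r) <= C / r^2) ->
  exists l, filterlim (fun b => RInt h (1/2) b) (Rbar_locally p_infty) (locally l).
Proof.
  intros Hc Hb.
  assert (HC : 0 <= C). { specialize (Hb 1 (Rle_refl 1)). pose proof (Rabs_pos (h 1)). simpl in Hb. lra. }
  assert (Hex : forall u v, 0 < u -> 0 < v -> ex_RInt h u v).
  { intros u v Hu Hv. apply exR. intros z Hz. apply Hc.
    destruct (Rle_lt_dec u v); [rewrite Rmin_left in Hz|rewrite Rmin_right in Hz]; lra. }
  refine (proj1 (@Hierarchy.filterlim_locally_cauchy R R_CompleteSpace (Rbar_locally p_infty) (Rbar_locally_filter p_infty) (fun b => RInt h (1/2) b)) _).
  intros eps. exists (fun b => Rmax 1 (C / eps) < b). split.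
  { exists (Rmax 1 (C / eps)). auto. }
  intros u v Hu Hv. apply ballR.
  pose proof (Rmax_l 1 (C/eps)). pose proof (Rmax_r 1 (C/eps)).
  pose proof (cond_pos eps).
  assert (Hu' : C / u < eps).
  { apply (Rmult_lt_reg_r u). lra. unfold Rdiv; rewrite Rmult_assoc, Rinv_l, Rmult_1_r by lra.
    assert (eps * (C/eps) = C) by (field; lra). nra. }
  assert (Hv' : C / v < eps).
  { apply (Rmult_lt_reg_r v). lra. unfold Rdiv; rewrite Rmult_assoc, Rinv_l, Rmult_1_r by lra.
    assert (eps * (C/eps) = C) by (field; lra). nra. }
  assert (E : RInt h (1/2) v - RInt h (1/2) u = RInt h u v).
  { rewrite <- (chasR h (1/2) u v). ring. apply Hex; lra. apply Hex; lra. }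
  simpl. rewrite E.
  assert (0 <= C / u) by (apply Rdiv_le_0_compat; lra).
  assert (0 <= C / v) by (apply Rdiv_le_0_compat; lra).
  destruct (Rle_lt_dec u v).
  - pose proof (tail_bound h C u v ltac:(lra) Hc Hb). lra.
  - rewrite swapR. 2: apply Hex; lra. rewrite Rabs_Ropp.
    pose proof (tail_bound h C v u ltac:(lra) Hc Hb). lra.
Qed.

Lemma lim_bound (F : R -> R) l B K :
  filterlim F (Rbar_locally p_infty) (locally l) -> (forall b, B <= b -> Rabs (F b) <= K) -> Rabs l <= K.
Proof.
  intros H HK. destruct (Rle_lt_dec (Rabs l) K) as [|Hlt]. auto. exfalso.
  assert (He : 0 < Rabs l - K) by lra.
  specialize (H (ball l (mkposreal _ He)) (locally_ball l (mkposreal _ He))).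
  destruct H as [M HM].
  specialize (HM (Rmax B M + 1) ltac:(pose proof (Rmax_r B M); lra)).
  apply ballR' in HM. simpl in HM.
  specialize (HK (Rmax B M + 1) ltac:(pose proof (Rmax_l B M); lra)).
  pose proof (Rabs_triang_inv l (F (Rmax B M + 1))).
  rewrite <- Rabs_Ropp in HM. rewrite Ropp_minus_distr in HM. lra.
Qed.

Lemma lim_unique (F : R -> R) l1 l2 :
  filterlim F (Rbar_locally p_infty) (locally l1) -> filterlim F (Rbar_locally p_infty) (locally l2) -> l1 = l2.
Proof.
  intros H1 H2. apply (filterlim_locally_unique (F := Rbar_locally p_infty) F); auto.
Qed.

Lemma lim_to_gen (h : R -> R) a l :
  (forall b, a <= b -> ex_RInt h a b) ->
  filterlim (fun b => RInt h a b) (Rbar_locally p_infty) (locally l) ->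
  is_RInt_gen h (at_point a) (Rbar_locally p_infty) l.
Proof.
  intros Hex H P HP. specialize (H P HP). destruct H as [M HM].
  apply (Filter_prod _ _ _ (fun x => x = a) (fun b => Rmax a M < b)).
  - reflexivity.
  - exists (Rmax a M). auto.
  - intros x y -> Hy. simpl. exists (RInt h a y). split.
    apply (RInt_correct (V := R_CompleteNormedModule)). apply Hex. pose proof (Rmax_l a M); lra.
    apply HM. pose proof (Rmax_r a M); lra.
Qed.

Lemma gen_to_lim (h : R -> R) a l :
  is_RInt_gen h (at_point a) (Rbar_locally p_infty) l ->
  filterlim (fun b => RInt h a b) (Rbar_locally p_infty) (locally l).
Proof.
  intros H P HP. specialize (H P HP). destruct H as [Q R HQ HR HQR].
  unfold filtermap. apply (filter_imp R). 2: exact HR.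
  intros b Hb. destruct (HQR a b HQ Hb) as [y [Hy Py]]. simpl in Hy.
  rewrite (is_RInt_unique (V := R_CompleteNormedModule) _ _ _ _ Hy). exact Py.
Qed.

Lemma loc_pos r : 0 < r -> locally r (fun t => 0 < t).
Proof.
  intro H. exists (mkposreal r H). intros t Ht. apply ballR' in Ht. simpl in Ht.
  apply Rabs_lt_between in Ht. lra.
Qed.

Lemma loc_int a b r : a < r < b -> locally r (fun t => a < t < b).
Proof.
  intro H. assert (He : 0 < Rmin (r - a) (b - r)) by (apply Rmin_pos; lra).
  exists (mkposreal _ He). intros t Ht. apply ballR' in Ht. simpl in Ht.
  pose proof (Rmin_l (r - a) (b - r)). pose proof (Rmin_r (r - a) (b - r)).
  apply Rabs_lt_between in Ht. lra.
Qed.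

Lemma Dn_const_val (c : R) n r : Derive_n (fun _ => c) n r = match n with O => c | S _ => 0 end.
Proof. destruct n. reflexivity. apply Derive_n_const. Qed.

Lemma chi_dn_zero chi (Hc : admissible_cutoff chi) n r : 0 < r < 1 -> Derive_n chi n r = 0.
Proof.
  intro Hr. destruct Hc as [_ [H0 _]].
  rewrite (Derive_n_ext_loc chi (fun _ => 0)). rewrite Dn_const_val. destruct n; auto.
  apply (filter_imp (fun t => 0 < t < 1)). intros t Ht. apply H0. lra.
  apply loc_int. auto.
Qed.

Lemma chi_dn_far chi (Hc : admissible_cutoff chi) n r : 2 < r -> Rabs (Derive_n chi n r) <= 1.
Proof.
  intro Hr. destruct Hc as [_ [_ [H1 _]]].
  rewrite (Derive_n_ext_loc chi (fun _ => 1)). rewrite Dn_const_val. destruct n.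
  rewrite Rabs_R1; lra. rewrite Rabs_R0; lra.
  apply (filter_imp (fun t => 2 < t < r + 1)). intros t Ht. apply H1. lra.
  apply loc_int. lra.
Qed.

Lemma chi_dn_deriv chi (Hc : admissible_cutoff chi) n r : 0 < r ->
  is_derive (Derive_n chi n) r (Derive_n chi (S n) r).
Proof.
  intro Hr. destruct Hc as [Hd _]. apply Derive_correct. apply (Hd (S n) r Hr).
Qed.

Lemma chi_dn_bound chi (Hc : admissible_cutoff chi) n : exists M, 0 <= M /\ forall r, 1 <= r -> Rabs (Derive_n chi n r) <= M.
Proof.
  destruct (cont_bound (Derive_n chi n) 1 3) as [M [HM0 HM]]. lra.
  { intros c Hc'. apply cder. eexists. apply chi_dn_deriv; auto. lra. }
  exists (Rmax M 1). split. apply Rle_trans with M; auto. apply Rmax_l.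
  intros r Hr. destruct (Rle_lt_dec r 3).
  apply Rle_trans with M. apply HM; lra. apply Rmax_l.
  apply Rle_trans with 1. apply chi_dn_far; auto; lra. apply Rmax_r.
Qed.

Lemma is_derive_R (f g : R -> R) x l l' : is_derive f x l -> (forall t, f t = g t) -> l = l' -> is_derive g x l'.
Proof. intros H He E. subst l'. apply (is_derive_ext f g x l He H). Qed.

Inductive Sg (chi : R -> R) : (R -> R) -> Prop :=
| Sg_base n : Sg chi (fun r => Derive_n chi n r / r^4)
| Sg_divr g : Sg chi g -> Sg chi (fun r => g r / r)
| Sg_plus g h : Sg chi g -> Sg chi h -> Sg chi (fun r => g r + h r)
| Sg_scal c g : Sg chi g -> Sg chi (fun r => c * g r)
| Sg_ext g h : Sg chi g -> (forall r, 0 < r -> g r = h r) -> Sg chi h.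

Lemma Sg_deriv chi (Hc : admissible_cutoff chi) g : Sg chi g ->
  exists g', Sg chi g' /\ forall r, 0 < r -> is_derive g r (g' r).
Proof.
  induction 1 as [n|g Hg [g' [Hg' Hd]]|g h Hg [g' [Hg' Hdg]] Hh [h' [Hh' Hdh]]|c g Hg [g' [Hg' Hd]]|g h Hg [g' [Hg' Hd]] He].
  - exists (fun r => Derive_n chi (S n) r / r^4 + (-4) * (Derive_n chi n r / r^4 / r)).
    split. apply Sg_plus. apply Sg_base. apply Sg_scal. apply Sg_divr. apply Sg_base.
    intros r Hr.
    assert (H1 : is_derive (fun r => / r^4) r (- 4 / r^5)).
    { auto_derive. assert (0 < r * (r * (r * (r * 1)))) by (repeat apply Rmult_lt_0_compat; lra). lra. field. lra. }
    pose proof (is_derive_mult (Derive_n chi n) (fun r => / r^4) r _ _ (chi_dn_deriv chi Hc n r Hr) H1 (fun a b => Rmult_comm a b)) as H2.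
    apply (is_derive_R _ _ _ _ _ H2). intro t. reflexivity.
    unfold plus, mult; simpl. field. lra.
  - exists (fun r => g' r / r + (-1) * (g r / r / r)). split.
    apply Sg_plus. apply Sg_divr; auto. apply Sg_scal. apply Sg_divr. apply Sg_divr. auto.
    intros r Hr.
    assert (H1 : is_derive (fun r => / r) r (- 1 / r^2)).
    { auto_derive. lra. field. lra. }
    pose proof (is_derive_mult g (fun r => / r) r _ _ (Hd r Hr) H1 (fun a b => Rmult_comm a b)) as H2.
    apply (is_derive_R _ _ _ _ _ H2). intro t. reflexivity.
    unfold plus, mult; simpl. field. lra.
  - exists (fun r => g' r + h' r). split. apply Sg_plus; auto.
    intros r Hr. apply (is_derive_plus g h). auto. auto.
  - exists (fun r => c * g' r). split. apply Sg_scal; auto.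
    intros r Hr. apply is_derive_scal. auto.
  - exists g'. split; auto. intros r Hr. apply (is_derive_ext_loc g).
    apply (filter_imp (fun t => 0 < t)). intros; auto. apply loc_pos; auto. auto.
Qed.

Lemma Sg_cont chi (Hc : admissible_cutoff chi) g : Sg chi g -> forall r, 0 < r -> continuous g r.
Proof.
  intros H r Hr. destruct (Sg_deriv chi Hc g H) as [g' [_ Hd]]. apply cder. eexists. apply Hd; auto.
Qed.

Lemma Sg_zero chi (Hc : admissible_cutoff chi) g : Sg chi g -> forall r, 0 < r < 1 -> g r = 0.
Proof.
  induction 1; intros r Hr.
  - rewrite (chi_dn_zero chi Hc n r Hr). unfold Rdiv. ring.
  - rewrite IHSg; auto. unfold Rdiv; ring.
  - rewrite IHSg1, IHSg2; auto. ring.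
  - rewrite IHSg; auto. ring.
  - rewrite <- H0 by lra. auto.
Qed.

Lemma Sg_bound chi (Hc : admissible_cutoff chi) g : Sg chi g ->
  exists C, 0 <= C /\ forall r, 1 <= r -> Rabs (g r) <= C / r^2.
Proof.
  induction 1 as [n|g Hg [C [HC HB]]|g h Hg [C1 [HC1 HB1]] Hh [C2 [HC2 HB2]]|c g Hg [C [HC HB]]|g h Hg [C [HC HB]] He].
  - destruct (chi_dn_bound chi Hc n) as [M [HM0 HM]]. exists M. split; auto.
    intros r Hr. specialize (HM r Hr).
    assert (0 < r^2) by (apply pow_lt; lra).
    unfold Rdiv. rewrite Rabs_mult, Rabs_inv, (Rabs_pos_eq (r^4)) by (apply pow_le; lra).
    apply Rmult_le_compat; auto. apply Rabs_pos. apply Rlt_le, Rinv_0_lt_compat, pow_lt; lra.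
    apply Rinv_le_contravar. auto. replace (r^4) with (r^2 * r^2) by ring.
    assert (1 <= r^2) by nra. nra.
  - exists C. split; auto. intros r Hr. specialize (HB r Hr).
    unfold Rdiv at 1. rewrite Rabs_mult, Rabs_inv, (Rabs_pos_eq r) by lra.
    assert (0 <= C / r^2) by (apply Rdiv_le_0_compat; auto; apply pow_lt; lra).
    apply Rle_trans with (C / r^2 * / r).
    apply Rmult_le_compat_r. apply Rlt_le, Rinv_0_lt_compat; lra. auto.
    assert (/ r <= 1). { rewrite <- Rinv_1. apply Rinv_le_contravar; lra. }
    nra.
  - exists (C1 + C2). split. lra. intros r Hr.
    eapply Rle_trans. apply Rabs_triang. specialize (HB1 r Hr). specialize (HB2 r Hr).
    unfold Rdiv in *. lra.
  - exists (Rabs c * C). split. apply Rmult_le_pos; auto. apply Rabs_pos.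
    intros r Hr. rewrite Rabs_mult. specialize (HB r Hr). unfold Rdiv in *. rewrite Rmult_assoc.
    apply Rmult_le_compat_l. apply Rabs_pos. auto.
  - exists C. split; auto. intros r Hr. rewrite <- He by lra. auto.
Qed.

Definition W (Jf : R -> R) (g : R -> R) (eta : R) := fun r => Jf (r * eta) * g r.

Lemma cJ_comp (Jf : R -> R) eta r : (forall x, continuous Jf x) -> continuous (fun r => Jf (r * eta)) r.
Proof. intro H. apply (continuous_comp (fun r => r * eta) Jf). apply cmul. apply cid. apply cconst. apply H. Qed.

Lemma W_cont chi (Hc : admissible_cutoff chi) Jf g eta : (forall x, continuous Jf x) -> Sg chi g ->
  forall r, 0 < r -> continuous (W Jf g eta) r.
Proof. intros HJ Hg r Hr. unfold W. apply cmul. apply cJ_comp; auto. apply (Sg_cont chi Hc g Hg r Hr). Qed.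

Lemma W_zero chi (Hc : admissible_cutoff chi) Jf g eta : Sg chi g -> forall r, 0 < r < 1 -> W Jf g eta r = 0.
Proof. intros Hg r Hr. unfold W. rewrite (Sg_zero chi Hc g Hg r Hr). ring. Qed.

Lemma W_bound Jf g eta C : 0 < eta -> (forall x, 0 <= x -> Rabs (Jf x) <= 1) ->
  (forall r, 1 <= r -> Rabs (g r) <= C / r^2) -> forall r, 1 <= r -> Rabs (W Jf g eta r) <= C / r^2.
Proof.
  intros He HJ Hg r Hr. unfold W. rewrite Rabs_mult.
  specialize (HJ (r * eta) ltac:(nra)). specialize (Hg r Hr).
  pose proof (Rabs_pos (g r)). pose proof (Rabs_pos (Jf (r * eta))). nra.
Qed.

Lemma RInt_zero_open (h : R -> R) a b : a <= b -> (forall r, a < r < b -> h r = 0) -> RInt h a b = 0.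
Proof.
  intros Hab H. apply (is_RInt_unique (V := R_CompleteNormedModule)).
  apply (is_RInt_ext (fun _ => 0)). intros x Hx. rewrite Rmin_left in Hx by lra. rewrite Rmax_right in Hx by lra.
  symmetry; auto.
  pose proof (is_RInt_const (V := R_NormedModule) a b 0) as Hc.
  assert (E : scal (b - a) (0:R) = 0) by (unfold scal; simpl; unfold mult; simpl; ring).
  change (is_RInt (fun _ : R => 0) a b (scal (b - a) (0:R))) in Hc. rewrite E in Hc. exact Hc.
Qed.

Lemma ex_RInt_zero_open (h : R -> R) a b : a <= b -> (forall r, a < r < b -> h r = 0) -> ex_RInt h a b.
Proof.
  intros Hab H. apply (ex_RInt_ext (fun _ => 0)). intros x Hx. rewrite Rmin_left in Hx by lra. rewrite Rmax_right in Hx by lra.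
  symmetry; auto. apply exR. intros; apply cconst.
Qed.

Lemma RInt_from1 (h : R -> R) b : (forall r, 0 < r < 1 -> h r = 0) -> (forall r, 0 < r -> continuous h r) -> 1 <= b ->
  RInt h (1/2) b = RInt h 1 b.
Proof.
  intros Hz Hc Hb. rewrite <- (chasR h (1/2) 1 b). rewrite (RInt_zero_open h). apply Rplus_0_l. lra.
  intros; apply Hz; lra.
  apply exR. intros z Hz'. apply Hc. rewrite Rmin_left in Hz' by lra. lra.
  apply exR. intros z Hz'. apply Hc. rewrite Rmin_left in Hz' by lra. lra.
Qed.

Lemma int_bound_C (h : R -> R) C b : (forall r, 0 < r < 1 -> h r = 0) -> (forall r, 0 < r -> continuous h r) ->
  (forall r, 1 <= r -> Rabs (h r) <= C / r^2) -> 0 <= C -> 1 <= b -> Rabs (RInt h (1/2) b) <= C.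
Proof.
  intros Hz Hc Hb HC Hb1. rewrite RInt_from1; auto.
  pose proof (tail_bound h C 1 b ltac:(lra) Hc Hb).
  assert (0 <= C / b) by (apply Rdiv_le_0_compat; lra). unfold Rdiv in *. rewrite Rinv_1 in H. lra.
Qed.

Lemma RInt_lin2 (f g : R -> R) a b c d : ex_RInt f a b -> ex_RInt g a b ->
  RInt (fun x => c * f x + d * g x) a b = c * RInt f a b + d * RInt g a b.
Proof.
  intros Hf Hg.
  rewrite (RInt_plus (V := R_CompleteNormedModule) (fun x => c * f x) (fun x => d * g x)).
  rewrite (RInt_scal (V := R_CompleteNormedModule) f), (RInt_scal (V := R_CompleteNormedModule) g); auto.
  apply (ex_RInt_scal (V := R_CompleteNormedModule) f); auto.
  apply (ex_RInt_scal (V := R_CompleteNormedModule) g); auto.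
Qed.

Lemma lim_comb (F G E : R -> R) lf lg c :
  filterlim F (Rbar_locally p_infty) (locally lf) ->
  filterlim G (Rbar_locally p_infty) (locally lg) ->
  filterlim E (Rbar_locally p_infty) (locally 0) ->
  (forall b, 1 <= b -> F b = c * (G b - E b)) -> lf = c * lg.
Proof.
  intros HF HG HE Heq.
  assert (H : is_lim (fun b => c * (G b - E b)) p_infty (c * (lg - 0))).
  { apply (is_lim_scal_l _ c p_infty (lg - 0)). apply is_lim_minus'; auto. }
  replace (c * lg) with (c * (lg - 0)) by ring.
  apply (lim_unique F). auto.
  apply (filterlim_ext_loc (fun b => c * (G b - E b))). exists 1. intros; symmetry; apply Heq; lra.
  exact H.
Qed.

Lemma lim_zero (E : R -> R) C : (forall b, 1 <= b -> Rabs (E b) <= C / b) -> filterlim E (Rbar_locally p_infty) (locally 0).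
Proof.
  intros H P [eps Heps].
  assert (HC : 0 <= C). { specialize (H 1 (Rle_refl 1)). pose proof (Rabs_pos (E 1)). unfold Rdiv in H. rewrite Rinv_1 in H. lra. }
  pose proof (cond_pos eps).
  exists (Rmax 1 (C / eps)). intros b Hb. apply Heps. apply ballR.
  pose proof (Rmax_l 1 (C/eps)). pose proof (Rmax_r 1 (C/eps)).
  specialize (H b ltac:(lra)). rewrite Rminus_0_r.
  apply Rle_lt_trans with (C / b). auto.
  apply (Rmult_lt_reg_r b). lra. unfold Rdiv; rewrite Rmult_assoc, Rinv_l, Rmult_1_r by lra.
  assert (eps * (C/eps) = C) by (field; lra). nra.
Qed.

Lemma J0_comp_deriv eta r : is_derive (fun r => J0 (r * eta)) r (eta * - J1 (r * eta)).
Proof.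
  apply (is_derive_comp J0 (fun r => r * eta)). apply is_derive_J0.
  auto_derive; auto. ring.
Qed.

Lemma J1_comp_deriv eta r : r * eta <> 0 -> is_derive (fun r => J1 (r * eta)) r (eta * (J0 (r * eta) - J1 (r * eta) / (r * eta))).
Proof.
  intro H. apply (is_derive_comp J1 (fun r => r * eta)). apply is_derive_J1; auto.
  auto_derive; auto. ring.
Qed.

Lemma Rint_val (f : R -> R) a b l : is_RInt f a b l -> RInt f a b = l.
Proof. apply (is_RInt_unique (V := R_CompleteNormedModule)). Qed.

Lemma ibpA chi (Hc : admissible_cutoff chi) g g' eta b : Sg chi g -> Sg chi g' ->
  (forall r, 0 < r -> is_derive g r (g' r)) -> 0 < eta -> 1 <= b ->
  RInt (W J1 g eta) (1/2) b = (/ eta) * (RInt (W J0 g' eta) (1/2) b - J0 (b * eta) * g b).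
Proof.
  intros Hg Hg' Hd He Hb.
  pose proof (is_RInt_scal_derive (V := R_CompleteNormedModule) (fun r => J0 (r * eta)) g (fun r => eta * - J1 (r * eta)) g' (1/2) b) as H.
  rewrite Rmin_left in H by lra. rewrite Rmax_right in H by lra.
  specialize (H (fun t _ => J0_comp_deriv eta t)).
  specialize (H (fun t Ht => Hd t ltac:(lra))).
  specialize (H (fun t _ => cmul _ _ t (cconst eta t) (continuous_opp _ _ (cJ_comp J1 eta t cont_J1)))).
  specialize (H (fun t Ht => Sg_cont chi Hc g' Hg' t ltac:(lra))).
  apply Rint_val in H.
  rewrite (Sg_zero chi Hc g Hg (1/2)) in H by lra.
  assert (Hex1 : ex_RInt (W J1 g eta) (1/2) b).
  { apply exR. intros z Hz. rewrite Rmin_left in Hz by lra. apply W_cont with chi; auto. apply cont_J1. lra. }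
  assert (Hex0 : ex_RInt (W J0 g' eta) (1/2) b).
  { apply exR. intros z Hz. rewrite Rmin_left in Hz by lra. apply W_cont with chi; auto. apply cont_J0. lra. }
  rewrite (RInt_ext _ (fun t => (- eta) * W J1 g eta t + 1 * W J0 g' eta t)) in H.
  2:{ intros x _. unfold W, plus, scal; simpl; unfold mult; simpl. ring. }
  rewrite RInt_lin2 in H; auto.
  unfold minus, plus, opp, scal in H; simpl in H; unfold mult in H; simpl in H.
  apply Rmult_eq_reg_l with eta. 2: lra.
  rewrite <- Rmult_assoc, Rinv_r, Rmult_1_l by lra. lra.
Qed.

Lemma ibpB chi (Hc : admissible_cutoff chi) h h' eta b : Sg chi h -> Sg chi h' ->
  (forall r, 0 < r -> is_derive h r (h' r)) -> 0 < eta -> 1 <= b ->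
  RInt (W J0 h eta) (1/2) b = (- / eta) * (RInt (W J1 (fun r => h' r + (-1) * (h r / r)) eta) (1/2) b - J1 (b * eta) * h b).
Proof.
  intros Hg Hg' Hd He Hb.
  pose proof (is_RInt_scal_derive (V := R_CompleteNormedModule) (fun r => J1 (r * eta)) h
     (fun r => eta * (J0 (r * eta) - J1 (r * eta) / (r * eta))) h' (1/2) b) as H.
  rewrite Rmin_left in H by lra. rewrite Rmax_right in H by lra.
  specialize (H (fun t Ht => J1_comp_deriv eta t ltac:(nra))).
  specialize (H (fun t Ht => Hd t ltac:(lra))).
  assert (Hcf : forall t, 1/2 <= t <= b -> continuous (fun r => eta * (J0 (r * eta) - J1 (r * eta) / (r * eta))) t).
  { intros t Ht. apply cmul. apply cconst. apply cminus. apply cJ_comp, cont_J0.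
    apply cdiv. apply cJ_comp, cont_J1. apply cmul. apply cid. apply cconst. nra. }
  specialize (H Hcf).
  specialize (H (fun t Ht => Sg_cont chi Hc h' Hg' t ltac:(lra))).
  apply Rint_val in H.
  rewrite (Sg_zero chi Hc h Hg (1/2)) in H by lra.
  set (h2 := fun r => h' r + (-1) * (h r / r)).
  assert (Hh2 : Sg chi h2). { apply Sg_plus; auto. apply Sg_scal. apply Sg_divr. auto. }
  assert (Hex1 : ex_RInt (W J1 h2 eta) (1/2) b).
  { apply exR. intros z Hz. rewrite Rmin_left in Hz by lra. apply W_cont with chi; auto. apply cont_J1. lra. }
  assert (Hex0 : ex_RInt (W J0 h eta) (1/2) b).
  { apply exR. intros z Hz. rewrite Rmin_left in Hz by lra. apply W_cont with chi; auto. apply cont_J0. lra. }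
  rewrite (RInt_ext _ (fun t => eta * W J0 h eta t + 1 * W J1 h2 eta t)) in H.
  2:{ intros x Hx. rewrite Rmin_left in Hx by lra. unfold W, h2, plus, scal; simpl; unfold mult; simpl. field. lra. }
  rewrite RInt_lin2 in H; auto.
  unfold minus, plus, opp, scal in H; simpl in H; unfold mult in H; simpl in H.
  apply Rmult_eq_reg_l with eta. 2: lra.
  replace (eta * (- / eta * (RInt (W J1 h2 eta) (1 / 2) b - J1 (b * eta) * h b))) with
    (- (RInt (W J1 h2 eta) (1 / 2) b - J1 (b * eta) * h b)) by (field; lra).
  lra.
Qed.

Lemma W_lim chi (Hc : admissible_cutoff chi) Jf g eta : (forall x, continuous Jf x) -> (forall x, 0 <= x -> Rabs (Jf x) <= 1) ->
  Sg chi g -> 0 < eta -> exists l, filterlim (fun b => RInt (W Jf g eta) (1/2) b) (Rbar_locally p_infty) (locally l).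
Proof.
  intros HJc HJb Hg He. destruct (Sg_bound chi Hc g Hg) as [C [HC HB]].
  apply (int_conv _ C). intros r Hr. apply W_cont with chi; auto.
  apply W_bound; auto.
Qed.

Lemma W_lim_bound chi (Hc : admissible_cutoff chi) Jf g eta C l : (forall x, continuous Jf x) -> (forall x, 0 <= x -> Rabs (Jf x) <= 1) ->
  Sg chi g -> 0 < eta -> 0 <= C -> (forall r, 1 <= r -> Rabs (g r) <= C / r^2) ->
  filterlim (fun b => RInt (W Jf g eta) (1/2) b) (Rbar_locally p_infty) (locally l) -> Rabs l <= C.
Proof.
  intros HJc HJb Hg He HC HB Hl. apply (lim_bound _ l 1 C Hl).
  intros b Hb. apply int_bound_C; auto.
  intros r Hr. apply W_zero with chi; auto.
  intros r Hr. apply W_cont with chi; auto.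
  apply W_bound; auto.
Qed.

Lemma bdry_zero chi (Hc : admissible_cutoff chi) Jf g eta : (forall x, 0 <= x -> Rabs (Jf x) <= 1) -> Sg chi g -> 0 < eta ->
  filterlim (fun b => Jf (b * eta) * g b) (Rbar_locally p_infty) (locally 0).
Proof.
  intros HJ Hg He. destruct (Sg_bound chi Hc g Hg) as [C [HC HB]].
  apply (lim_zero _ C). intros b Hb.
  pose proof (W_bound Jf g eta C He HJ HB b Hb) as H. unfold W in H.
  eapply Rle_trans. apply H.
  unfold Rdiv. apply Rmult_le_compat_l. auto. apply Rinv_le_contravar. lra.
  simpl. nra.
Qed.

Lemma decay chi (Hc : admissible_cutoff chi) k : forall g, Sg chi g -> exists C, 0 <= C /\
  forall eta, 1 <= eta -> forall l0 l1,
    filterlim (fun b => RInt (W J0 g eta) (1/2) b) (Rbar_locally p_infty) (locally l0) ->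
    filterlim (fun b => RInt (W J1 g eta) (1/2) b) (Rbar_locally p_infty) (locally l1) ->
    Rabs l0 <= C / eta^k /\ Rabs l1 <= C / eta^k.
Proof.
  induction k as [|k IH]; intros g Hg.
  - destruct (Sg_bound chi Hc g Hg) as [C [HC HB]]. exists C. split; auto.
    intros eta He l0 l1 H0 H1. simpl. unfold Rdiv. rewrite Rinv_1, Rmult_1_r. split.
    apply (W_lim_bound chi Hc J0 g eta C l0); auto. apply cont_J0. apply J0_bnd. lra.
    apply (W_lim_bound chi Hc J1 g eta C l1); auto. apply cont_J1. apply J1_bnd. lra.
  - destruct (Sg_deriv chi Hc g Hg) as [g' [Hg' Hd]].
    set (h2 := fun r => g' r + (-1) * (g r / r)).
    assert (Hh2 : Sg chi h2). { apply Sg_plus; auto. apply Sg_scal. apply Sg_divr. auto. }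
    destruct (IH g' Hg') as [C1 [HC1 H1]].
    destruct (IH h2 Hh2) as [C2 [HC2 H2]].
    exists (Rmax C1 C2). split. apply Rle_trans with C1; auto. apply Rmax_l.
    intros eta He l0 l1 Hl0 Hl1.
    assert (Hep : 0 < eta) by lra.
    destruct (W_lim chi Hc J0 g' eta cont_J0 J0_bnd Hg' Hep) as [a0 Ha0].
    destruct (W_lim chi Hc J1 g' eta cont_J1 J1_bnd Hg' Hep) as [a1 Ha1].
    destruct (W_lim chi Hc J0 h2 eta cont_J0 J0_bnd Hh2 Hep) as [c0 Hc0].
    destruct (W_lim chi Hc J1 h2 eta cont_J1 J1_bnd Hh2 Hep) as [c1 Hc1].
    destruct (H1 eta He a0 a1 Ha0 Ha1) as [Ba0 _].
    destruct (H2 eta He c0 c1 Hc0 Hc1) as [_ Bc1].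
    assert (E1 : l1 = / eta * a0).
    { apply (lim_comb _ _ (fun b => J0 (b * eta) * g b) l1 a0 (/ eta) Hl1 Ha0).
      apply bdry_zero with chi; auto. apply J0_bnd.
      intros b Hb. apply ibpA with chi; auto. }
    assert (E0 : l0 = - / eta * c1).
    { apply (lim_comb _ _ (fun b => J1 (b * eta) * g b) l0 c1 (- / eta) Hl0 Hc1).
      apply bdry_zero with chi; auto. apply J1_bnd.
      intros b Hb. apply ibpB with chi; auto. }
    assert (Hpk : 0 < eta ^ k) by (apply pow_lt; lra).
    assert (Hk : C1 / eta ^ k <= Rmax C1 C2 / eta ^ k).
    { unfold Rdiv. apply Rmult_le_compat_r. apply Rlt_le, Rinv_0_lt_compat; auto. apply Rmax_l. }
    assert (Hk2 : C2 / eta ^ k <= Rmax C1 C2 / eta ^ k).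
    { unfold Rdiv. apply Rmult_le_compat_r. apply Rlt_le, Rinv_0_lt_compat; auto. apply Rmax_r. }
    assert (Hs : Rmax C1 C2 / eta ^ k * / eta = Rmax C1 C2 / eta ^ S k).
    { simpl. field. split; lra. }
    split.
    + rewrite E0, Rabs_mult, Rabs_Ropp, Rabs_inv, Rabs_pos_eq by lra.
      rewrite <- Hs. rewrite Rmult_comm. apply Rmult_le_compat_r. apply Rlt_le, Rinv_0_lt_compat; lra. lra.
    + rewrite E1, Rabs_mult, Rabs_inv, Rabs_pos_eq by lra.
      rewrite <- Hs. rewrite Rmult_comm. apply Rmult_le_compat_r. apply Rlt_le, Rinv_0_lt_compat; lra. lra.
Qed.

Definition g0 (chi : R -> R) := fun r => Derive_n chi 0 r / r^4.
Definition Hf (chi : R -> R) (eta : R) := fun r => J1 (r * eta) * (chi r / r ^ 5) * r.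

Lemma Hf_W chi eta r : 0 < r -> Hf chi eta r = W J1 (g0 chi) eta r.
Proof. intro Hr. unfold Hf, W, g0. simpl. field. lra. Qed.

Lemma Hf_zero chi (Hc : admissible_cutoff chi) eta r : 0 < r < 1 -> Hf chi eta r = 0.
Proof. intro Hr. destruct Hc as [_ [H0 _]]. unfold Hf. rewrite H0 by lra. unfold Rdiv. ring. Qed.

Lemma hank_lim chi (Hc : admissible_cutoff chi) eta : 0 < eta -> exists l,
  is_RInt_gen (Hf chi eta) (at_point 0) (Rbar_locally p_infty) l /\
  filterlim (fun b => RInt (W J1 (g0 chi) eta) (1/2) b) (Rbar_locally p_infty) (locally l) /\
  hankel1 (fun r => chi r / r ^ 5) eta = l.
Proof.
  intro He.
  assert (Hg : Sg chi (g0 chi)) by apply Sg_base.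
  destruct (W_lim chi Hc J1 (g0 chi) eta cont_J1 J1_bnd Hg He) as [l Hl].
  assert (Hexh : forall b, 1/2 <= b -> ex_RInt (Hf chi eta) (1/2) b).
  { intros b Hb. apply (ex_RInt_ext (W J1 (g0 chi) eta)).
    intros x Hx. rewrite Rmin_left in Hx by lra. symmetry. apply Hf_W. lra.
    apply exR. intros z Hz. rewrite Rmin_left in Hz by lra. apply W_cont with chi; auto. apply cont_J1. lra. }
  assert (Hex0 : ex_RInt (Hf chi eta) 0 (1/2)).
  { apply ex_RInt_zero_open. lra. intros; apply Hf_zero; auto; lra. }
  assert (Heq : forall b, 1/2 <= b -> RInt (Hf chi eta) 0 b = RInt (W J1 (g0 chi) eta) (1/2) b).
  { intros b Hb. rewrite <- (chasR _ 0 (1/2) b); auto.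
    rewrite (RInt_zero_open (Hf chi eta) 0 (1/2)). 2: lra. 2:{ intros; apply Hf_zero; auto; lra. }
    rewrite Rplus_0_l. apply RInt_ext. intros x Hx. rewrite Rmin_left in Hx by lra. apply Hf_W. lra. }
  assert (Hgen : is_RInt_gen (Hf chi eta) (at_point 0) (Rbar_locally p_infty) l).
  { apply lim_to_gen.
    - intros b Hb. destruct (Rle_lt_dec b (1/2)).
      + apply ex_RInt_zero_open. auto. intros; apply Hf_zero; auto; lra.
      + apply (ex_RInt_Chasles _ 0 (1/2) b); auto. apply Hexh. lra.
    - apply (filterlim_ext_loc (fun b => RInt (W J1 (g0 chi) eta) (1/2) b)).
      exists (1/2). intros b Hb. symmetry. apply Heq. lra. auto. }
  exists l. split; auto. split; auto.
  unfold hankel1. apply (is_RInt_gen_unique (V := R_CompleteNormedModule)). exact Hgen.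
Qed.

Lemma ln_mono x y : 0 < x -> x <= y -> ln x <= ln y.
Proof. intros H1 H2. destruct H2. apply Rlt_le, ln_increasing; auto. subst; lra. Qed.

Lemma ln2_lt1 : ln 2 < 1.
Proof.
  pose proof (exp_ineq1 1 ltac:(lra)). rewrite <- (ln_exp 1) at 1. apply ln_increasing; lra.
Qed.

Lemma jbr_bnd t : Rabs t + 1 <= 2 * jbr t.
Proof.
  unfold jbr.
  assert (H1 : Rabs t <= sqrt (1 + t^2)).
  { rewrite <- (sqrt_pow2 (Rabs t)) by apply Rabs_pos. apply sqrt_le_1_alt.
    rewrite <- Rsqr_pow2, <- Rsqr_abs, Rsqr_pow2. lra. }
  assert (H2 : 1 <= sqrt (1 + t^2)).
  { rewrite <- sqrt_1 at 1. apply sqrt_le_1_alt. pose proof (pow2_ge_0 t). lra. }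
  lra.
Qed.

Lemma chi_cont chi (Hc : admissible_cutoff chi) x : 0 < x -> continuous chi x.
Proof. intro H. destruct Hc as [Hd _]. apply cder. apply (Hd 1%nat x H). Qed.

Lemma Phi_int eta b : 0 < eta -> 1 <= b ->
  RInt (fun r => / (r * (1 + r^2 * eta^2))) 1 b = (ln b - ln (1 + b^2 * eta^2) / 2) - (ln 1 - ln (1 + 1^2 * eta^2) / 2).
Proof.
  intros He Hb. apply Rint_val.
  apply (is_RInt_derive (V := R_CompleteNormedModule) (fun r => ln r - ln (1 + r^2 * eta^2) / 2)).
  - intros x Hx. rewrite Rmin_left in Hx by lra. rewrite Rmax_right in Hx by lra.
    auto_derive. repeat split; try lra. nra. field. split; nra.
  - intros x Hx. rewrite Rmin_left in Hx by lra. rewrite Rmax_right in Hx by lra.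
    apply cinv. apply cmul. apply cid. apply cplus. apply cconst. apply cmul. apply cpow, cid. apply cconst.
    assert (0 < x^2 * eta^2) by (apply Rmult_lt_0_compat; apply pow_lt; lra).
    assert (0 < x * (1 + x^2 * eta^2)) by (apply Rmult_lt_0_compat; lra). lra.
Qed.

Lemma small_eta chi (Hc : admissible_cutoff chi) : exists C, 0 < C /\
  forall eta, 0 < eta < 1 -> Rabs (hankel1 (fun r => chi r / r ^ 5) eta) <= C * eta ^ 3 * jbr (ln eta).
Proof.
  destruct J1_diff_bound as [K [HK HKb]].
  destruct (chi_dn_bound chi Hc 0) as [M [HM0 HM]]. simpl in HM.
  exists (2 * K * M + 1). split. nra.
  intros eta He.
  destruct (hank_lim chi Hc eta ltac:(lra)) as [l [_ [Hl ->]]].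
  pose proof Hc as Hc'. destruct Hc' as [_ [H0 [_ [Hm1 _]]]].
  apply gen_to_lim in Hm1.
  assert (Hcc : forall x, 0 < x -> continuous (fun x => chi x / x^3) x).
  { intros x Hx. apply cdiv. apply chi_cont; auto. apply cpow, cid. apply pow_nonzero; lra. }
  assert (Hmz : forall x, 0 < x < 1 -> chi x / x^3 = 0).
  { intros x Hx. rewrite H0 by lra. unfold Rdiv; ring. }
  set (m := fun b => RInt (fun x => chi x / x^3) 0 b) in Hm1.
  set (F := fun b => RInt (W J1 (g0 chi) eta) (1/2) b) in Hl.
  assert (HD : is_lim (fun b => F b - (eta/2) * m b) p_infty (l - eta/2 * 0)).
  { apply is_lim_minus'. exact Hl. apply (is_lim_scal_l m (eta/2) p_infty 0). exact Hm1. }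
  rewrite Rmult_0_r, Rminus_0_r in HD.
  assert (Hg : Sg chi (g0 chi)) by apply Sg_base.
  assert (HWc : forall r, 0 < r -> continuous (W J1 (g0 chi) eta) r).
  { intros r Hr. apply W_cont with chi; auto. apply cont_J1. }
  assert (Hbnd : forall b, 1 <= b -> Rabs (F b - eta/2 * m b) <= K * M * eta^3 * (1 - ln eta)).
  { intros b Hb.
    assert (EF : F b = RInt (W J1 (g0 chi) eta) 1 b).
    { unfold F. apply RInt_from1; auto. intros r Hr. apply W_zero with chi; auto. }
    assert (Em : m b = RInt (fun x => chi x / x^3) 1 b).
    { unfold m. rewrite <- (chasR _ 0 1 b). rewrite RInt_zero_open. apply Rplus_0_l. lra. auto.
      apply ex_RInt_zero_open. lra. auto.
      apply exR. intros z Hz. rewrite Rmin_left in Hz by lra. apply Hcc. lra. }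
    rewrite EF, Em.
    replace (RInt (W J1 (g0 chi) eta) 1 b - eta / 2 * RInt (fun x => chi x / x ^ 3) 1 b)
      with (RInt (fun r => 1 * W J1 (g0 chi) eta r + (- (eta/2)) * (chi r / r^3)) 1 b).
    2:{ rewrite RInt_lin2. rewrite Rmult_1_l, <- Ropp_mult_distr_l. reflexivity.
        apply exR. intros z Hz. rewrite Rmin_left in Hz by lra. apply HWc. lra.
        apply exR. intros z Hz. rewrite Rmin_left in Hz by lra. apply Hcc. lra. }
    eapply Rle_trans.
    apply (RInt_abs_bound _ (fun r => K * M * eta^3 * / (r * (1 + r^2 * eta^2)))). auto.
    - intros r Hr. apply cplus. apply cmul. apply cconst. apply HWc. lra.
      apply cmul. apply cconst. apply Hcc. lra.
    - intros r Hr. apply cmul. apply cconst. apply cinv. apply cmul. apply cid. apply cplus. apply cconst.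
      apply cmul. apply cpow, cid. apply cconst.
      assert (0 < r^2 * eta^2) by (apply Rmult_lt_0_compat; apply pow_lt; lra).
      assert (0 < r * (1 + r^2 * eta^2)) by (apply Rmult_lt_0_compat; lra). lra.
    - intros r Hr.
      replace (1 * W J1 (g0 chi) eta r + - (eta / 2) * (chi r / r ^ 3)) with
        ((J1 (r * eta) - (r * eta) / 2) * chi r / r^4).
      2:{ unfold W, g0. simpl. field. lra. }
      specialize (HKb (r * eta) ltac:(nra)). specialize (HM r ltac:(lra)).
      assert (0 < r^4) by (apply pow_lt; lra).
      unfold Rdiv. rewrite !Rabs_mult, Rabs_inv, (Rabs_pos_eq (r^4)) by lra.
      replace (K * M * eta ^ 3 * / (r * (1 + r ^ 2 * eta ^ 2))) with
        (K * ((r * eta) ^ 3 * / (1 + (r * eta) ^ 2)) * M * / r^4).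
      2:{ field. split; nra. }
      apply Rmult_le_compat_r. apply Rlt_le, Rinv_0_lt_compat; lra.
      apply Rmult_le_compat; auto. apply Rabs_pos. apply Rabs_pos.
    - rewrite (RInt_scal (V := R_CompleteNormedModule) (fun r => / (r * (1 + r^2 * eta^2)))).
      2:{ apply exR. intros z Hz. rewrite Rmin_left in Hz by lra.
          apply cinv. apply cmul. apply cid. apply cplus. apply cconst. apply cmul. apply cpow, cid. apply cconst.
          assert (0 < z^2 * eta^2) by (apply Rmult_lt_0_compat; apply pow_lt; lra).
          assert (0 < z * (1 + z^2 * eta^2)) by (apply Rmult_lt_0_compat; lra). lra. }
      change (scal (K * M * eta ^ 3) ?X) with (K * M * eta ^ 3 * X).
      rewrite Phi_int by lra. rewrite ln_1.
      assert (Hkm : 0 <= K * M * eta ^ 3) by (apply Rmult_le_pos; [nra| apply pow_le; lra]).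
      apply Rmult_le_compat_l. auto.
      assert (E1 : ln b - ln (1 + b ^ 2 * eta ^ 2) / 2 <= - ln eta).
      { assert (Hbe : 0 < b * eta) by (apply Rmult_lt_0_compat; lra).
        assert (ln ((b * eta)^2) <= ln (1 + b^2 * eta^2)).
        { apply ln_mono. apply pow_lt; lra. rewrite Rpow_mult_distr. lra. }
        rewrite ln_pow in H by lra. rewrite ln_mult in H by lra. replace (INR 2) with 2 in H by (simpl; ring). lra. }
      assert (E2 : ln (1 + 1 ^ 2 * eta ^ 2) <= ln 2).
      { apply ln_mono. nra. simpl. nra. }
      pose proof ln2_lt1.
      assert (0 <= ln (1 + 1 ^ 2 * eta ^ 2)). { rewrite <- ln_1. apply ln_mono. lra. simpl. nra. }
      lra. }
  pose proof (lim_bound _ l 1 _ HD Hbnd) as Hlb.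
  eapply Rle_trans. apply Hlb.
  pose proof (jbr_bnd (ln eta)).
  assert (Hln : ln eta < 0). { rewrite <- ln_1. apply ln_increasing; lra. }
  rewrite Rabs_left in H by lra.
  assert (0 < eta^3) by (apply pow_lt; lra).
  assert (0 <= K * M) by nra.
  assert (K * M * (1 - ln eta) <= (2 * K * M + 1) * jbr (ln eta)).
  { assert (0 <= jbr (ln eta)) by (unfold jbr; apply sqrt_pos). nra. }
  replace (K * M * eta ^ 3 * (1 - ln eta)) with (eta^3 * (K * M * (1 - ln eta))) by ring.
  replace ((2 * K * M + 1) * eta ^ 3 * jbr (ln eta)) with (eta^3 * ((2 * K * M + 1) * jbr (ln eta))) by ring.
  apply Rmult_le_compat_l; lra.
Qed.

Lemma part2 chi : admissible_cutoff chi ->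
     (forall eta, 0 < eta -> ex_int_0_inf (fun r => J1 (r * eta) * (chi r / r ^ 5) * r)) /\
     (exists C, 0 < C /\
        forall eta, 0 < eta < 1 ->
          Rabs (hankel1 (fun r => chi r / r ^ 5) eta) <= C * eta ^ 3 * jbr (ln eta)) /\
     (forall k : nat, exists Ck, 0 < Ck /\
        forall eta, 1 <= eta ->
          Rabs (hankel1 (fun r => chi r / r ^ 5) eta) <= Ck / eta ^ k).
Proof.
  intro Hc. split; [|split].
  - intros eta He. destruct (hank_lim chi Hc eta He) as [l [Hl _]]. exists l. exact Hl.
  - apply small_eta; auto.
  - intro k. destruct (decay chi Hc k (g0 chi) (Sg_base chi 0)) as [C [HC HD]].
    exists (C + 1). split. lra. intros eta He.
    destruct (hank_lim chi Hc eta ltac:(lra)) as [l [_ [Hl ->]]].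
    destruct (W_lim chi Hc J0 (g0 chi) eta cont_J0 J0_bnd (Sg_base chi 0) ltac:(lra)) as [l0 Hl0].
    destruct (HD eta He l0 l Hl0 Hl) as [_ H].
    eapply Rle_trans. apply H. unfold Rdiv. apply Rmult_le_compat_r.
    apply Rlt_le, Rinv_0_lt_compat, pow_lt; lra. lra.
Qed.

Definition mk (k : nat) (x : R) : R := if Rlt_dec 0 x then / x ^ k * exp (- / x) else 0.

Lemma mk_pos k x : 0 < x -> mk k x = / x ^ k * exp (- / x).
Proof. intro H. unfold mk. destruct (Rlt_dec 0 x); [reflexivity|lra]. Qed.
Lemma mk_npos k x : x <= 0 -> mk k x = 0.
Proof. intro H. unfold mk. destruct (Rlt_dec 0 x); [lra|reflexivity]. Qed.
Lemma mk_ge0 k x : 0 <= mk k x.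
Proof.
  unfold mk. destruct (Rlt_dec 0 x). 2: lra.
  apply Rmult_le_pos. apply Rlt_le, Rinv_0_lt_compat, pow_lt; auto. apply Rlt_le, exp_pos.
Qed.
Lemma mk_gt0 k x : 0 < x -> 0 < mk k x.
Proof.
  intro H. rewrite mk_pos by auto.
  apply Rmult_lt_0_compat. apply Rinv_0_lt_compat, pow_lt; auto. apply exp_pos.
Qed.

Lemma exp_pow_n (y : R) n : exp (INR n * y) = exp y ^ n.
Proof.
  induction n. simpl. rewrite Rmult_0_l, exp_0. reflexivity.
  rewrite S_INR. rewrite Rmult_plus_distr_r, Rmult_1_l, exp_plus, IHn. simpl. ring.
Qed.

Lemma exp_ge_pow (y : R) n : 0 < y -> (y / INR (S n)) ^ S n <= exp y.
Proof.
  intro Hy. pose proof (pos_INR n) as Hn. assert (HS : 0 < INR (S n)) by (rewrite S_INR; lra).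
  replace y with (INR (S n) * (y / INR (S n))) at 2. 2:{ field. apply Rgt_not_eq; lra. }
  rewrite exp_pow_n. apply pow_incr.
  assert (Hq : 0 < y / INR (S n)) by (apply Rdiv_lt_0_compat; lra).
  pose proof (exp_ineq1 (y / INR (S n)) ltac:(apply Rgt_not_eq; lra)). lra.
Qed.

Lemma mk_small k x : 0 < x -> mk k x <= INR (S k) ^ S k * x.
Proof.
  intro Hx. rewrite mk_pos by auto.
  assert (H := exp_ge_pow (/ x) k ltac:(apply Rinv_0_lt_compat; auto)).
  pose proof (pos_INR k). assert (Hk : 0 < INR (S k)) by (rewrite S_INR; lra).
  assert (Hp : 0 < (/ x / INR (S k)) ^ S k) by (apply pow_lt, Rdiv_lt_0_compat; auto; apply Rinv_0_lt_compat; auto).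
  rewrite exp_Ropp.
  apply Rle_trans with (/ x ^ k * / ((/ x / INR (S k)) ^ S k)).
  apply Rmult_le_compat_l. apply Rlt_le, Rinv_0_lt_compat, pow_lt; auto.
  apply Rinv_le_contravar; auto.
  right. replace ((/ x / INR (S k)) ^ S k) with (/ (x ^ S k * INR (S k) ^ S k)).
  2:{ unfold Rdiv. rewrite Rpow_mult_distr, !pow_inv, Rinv_mult. reflexivity. }
  rewrite Rinv_inv. simpl. field. apply pow_nonzero; lra.
Qed.

Lemma is_derive_mk k x : is_derive (mk k) x (- INR k * mk (S k) x + mk (S (S k)) x).
Proof.
  destruct (Rlt_le_dec 0 x) as [Hx|Hx].
  - apply (is_derive_ext_loc (fun x => / x ^ k * exp (- / x))).
    apply (filter_imp (fun t => 0 < t)). intros t Ht. symmetry. apply mk_pos; auto.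
    exists (mkposreal x Hx). intros t Ht. apply ballR' in Ht. simpl in Ht. apply Rabs_lt_between in Ht. lra.
    rewrite !mk_pos by auto.
    destruct k.
    + simpl. auto_derive. lra. field. lra.
    + auto_derive.
      { split. apply Rgt_not_eq. apply Rmult_lt_0_compat; [lra| apply pow_lt; lra]. split; auto. apply Rgt_not_eq; lra. }
      change (match k with 0%nat => 1 | S _ => INR k + 1 end) with (INR (S k)).
      rewrite !S_INR. simpl. field. split. apply pow_nonzero; lra. apply Rgt_not_eq; lra.
  - destruct Hx as [Hx|Hx].
    + apply (is_derive_ext_loc (fun _ => 0)).
      apply (filter_imp (fun t => t < 0)). intros t Ht. symmetry. apply mk_npos; lra.
      exists (mkposreal (-x) ltac:(simpl; lra)). intros t Ht. apply ballR' in Ht. simpl in Ht. apply Rabs_lt_between in Ht. lra.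
      rewrite !mk_npos by lra. replace (- INR k * 0 + 0) with 0 by ring. auto_derive; auto.
    + subst x. rewrite !mk_npos by lra. replace (- INR k * 0 + 0) with 0 by ring.
      apply is_derive_Reals. intros eps Heps.
      set (c := INR (S (S k)) ^ S (S k)).
      assert (Hc : 0 < c). { unfold c. apply pow_lt. rewrite !S_INR. pose proof (pos_INR k). lra. }
      exists (mkposreal (eps / c) ltac:(apply Rdiv_lt_0_compat; auto)). intros h Hh Hhd. simpl in Hhd.
      rewrite Rplus_0_l. rewrite (mk_npos k 0) by lra. rewrite Rminus_0_r, Rminus_0_r.
      destruct (Rlt_le_dec 0 h) as [Hp|Hn].
      + assert (E : mk k h / h = mk (S k) h).
        { rewrite !mk_pos by auto. simpl. field. split. apply pow_nonzero; lra. apply Rgt_not_eq; lra. }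
        rewrite E. rewrite Rabs_pos_eq by apply mk_ge0.
        eapply Rle_lt_trans. apply mk_small; auto. fold c.
        rewrite Rabs_pos_eq in Hhd by lra.
        apply (Rmult_lt_compat_l c) in Hhd; auto. replace (c * (eps / c)) with eps in Hhd by (field; lra). lra.
      + rewrite mk_npos by lra. unfold Rdiv. rewrite Rmult_0_l, Rabs_R0. auto.
Qed.

Definition qf (t : R) := (t - 1) * (2 - t).

Inductive C2 : (R -> R) -> Prop :=
| C2_base j k : C2 (fun t => t ^ j * mk k (qf t))
| C2_plus f g : C2 f -> C2 g -> C2 (fun t => f t + g t)
| C2_scal c f : C2 f -> C2 (fun t => c * f t)
| C2_ext f g : C2 f -> (forall t, f t = g t) -> C2 g.

Lemma is_derive_R' (f g : R -> R) x l l' : is_derive f x l -> (forall t, f t = g t) -> l = l' -> is_derive g x l'.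
Proof. intros H He E. subst l'. apply (is_derive_ext f g x l He H). Qed.

Lemma C2_deriv f : C2 f -> exists f', C2 f' /\ forall t, is_derive f t (f' t).
Proof.
  induction 1 as [j k|f g Hf [f' [Hf' Hdf]] Hg [g' [Hg' Hdg]]|c f Hf [f' [Hf' Hd]]|f g Hf [f' [Hf' Hd]] He].
  - exists (fun t => INR j * (t ^ (pred j) * mk k (qf t)) +
       (- INR k) * (3 * (t ^ j * mk (S k) (qf t)) + (-2) * (t ^ (S j) * mk (S k) (qf t))) +
       (3 * (t ^ j * mk (S (S k)) (qf t)) + (-2) * (t ^ (S j) * mk (S (S k)) (qf t)))).
    split.
    + apply C2_plus. apply C2_plus. apply C2_scal, C2_base.
      apply C2_scal. apply C2_plus; apply C2_scal; apply C2_base.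
      apply C2_plus; apply C2_scal; apply C2_base.
    + intro t.
      assert (H1 : is_derive (fun t => t ^ j) t (INR j * 1 * t ^ pred j)).
      { apply (is_derive_pow (fun t => t) j t 1). auto_derive; auto. }
      assert (H2 : is_derive (fun t => mk k (qf t)) t (scal (3 - 2 * t) (- INR k * mk (S k) (qf t) + mk (S (S k)) (qf t)))).
      { apply (is_derive_comp (mk k) qf). apply is_derive_mk. unfold qf. auto_derive; auto. ring. }
      pose proof (is_derive_mult (fun t => t ^ j) (fun t => mk k (qf t)) t _ _ H1 H2 (fun a b => Rmult_comm a b)) as H3.
      apply (is_derive_R' _ _ _ _ _ H3). intro; reflexivity.
      unfold plus, mult, scal; simpl; unfold mult; simpl. ring.
  - exists (fun t => f' t + g' t). split. apply C2_plus; auto.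
    intro t. apply (is_derive_plus f g); auto.
  - exists (fun t => c * f' t). split. apply C2_scal; auto.
    intro t. apply is_derive_scal; auto.
  - exists f'. split; auto. intro t. apply (is_derive_ext f g); auto.
Qed.

Lemma C2_zero f : C2 f -> forall t, t <= 1 \/ 2 <= t -> f t = 0.
Proof.
  induction 1; intros t Ht.
  - rewrite mk_npos. ring. unfold qf. destruct Ht; nra.
  - rewrite IHC2_1, IHC2_2; auto. ring.
  - rewrite IHC2; auto. ring.
  - rewrite <- H0. auto.
Qed.

Lemma C2_mult_t f : C2 f -> C2 (fun t => t * f t).
Proof.
  induction 1.
  - apply (C2_ext (fun t => t ^ S j * mk k (qf t))). apply C2_base. intro t. simpl. ring.
  - apply (C2_ext (fun t => t * f t + t * g t)). apply C2_plus; auto. intro t; ring.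
  - apply (C2_ext (fun t => c * (t * f t))). apply C2_scal; auto. intro t; ring.
  - apply (C2_ext (fun t => t * f t)). auto. intro t. rewrite H0. reflexivity.
Qed.

Lemma C2_cont f : C2 f -> forall t, continuous f t.
Proof. intros H t. destruct (C2_deriv f H) as [f' [_ Hd]]. apply cder. eexists. apply Hd. Qed.

Lemma Dclosed_Dn (P : (R -> R) -> Prop) :
  (forall f, P f -> exists f', P f' /\ forall x, is_derive f x (f' x)) ->
  forall n f, P f -> exists g, P g /\ forall x, Derive_n f n x = g x.
Proof.
  intros HP n. induction n as [|n IH]; intros f Hf.
  - exists f. split; auto.
  - destruct (IH f Hf) as [g [Hg Eg]]. destruct (HP g Hg) as [g' [Hg' Hd]].
    exists g'. split; auto. intro x. simpl.
    rewrite (Derive_ext (Derive_n f n) g x Eg). apply is_derive_unique. apply Hd.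
Qed.

Lemma Dclosed_smooth (P : (R -> R) -> Prop) :
  (forall f, P f -> exists f', P f' /\ forall x, is_derive f x (f' x)) ->
  forall f, P f -> forall n x, ex_derive_n f n x.
Proof.
  intros HP f Hf n x. destruct n. exact I.
  destruct (Dclosed_Dn P HP n f Hf) as [g [Hg Eg]]. destruct (HP g Hg) as [g' [_ Hd]].
  simpl. apply (ex_derive_ext g). intro t. symmetry. apply Eg. eexists. apply Hd.
Qed.

Definition bb := fun t : R => t ^ 0 * mk 0 (qf t).
Lemma C2_bb : C2 bb.
Proof. apply C2_base. Qed.
Lemma bb_cont t : continuous bb t.
Proof. apply C2_cont, C2_bb. Qed.
Lemma bb_pos t : 1 < t < 2 -> 0 < bb t.
Proof. intro H. unfold bb. simpl. rewrite Rmult_1_l. apply mk_gt0. unfold qf. nra. Qed.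
Lemma exbb a c : ex_RInt bb a c.
Proof. apply exR. intros; apply bb_cont. Qed.

Definition KK := RInt bb 1 2.
Lemma KK_pos : 0 < KK.
Proof. unfold KK. apply RInt_gt_0. lra. apply bb_pos. intros; apply bb_cont. Qed.

Definition Sx (x : R) := RInt bb 1 x / KK.

Lemma Sx_deriv x : is_derive Sx x (bb x / KK).
Proof.
  assert (H : is_derive (fun y => RInt bb 1 y) x (bb x)).
  { apply (is_derive_RInt (V := R_CompleteNormedModule) bb (fun y => RInt bb 1 y) 1 x).
    exists (mkposreal 1 Rlt_0_1). intros y _. apply (RInt_correct (V := R_CompleteNormedModule)). apply exbb.
    apply bb_cont. }
  apply (is_derive_scal _ x (/ KK)) in H.
  apply (is_derive_R' _ _ _ _ _ H). intro t. unfold Sx, Rdiv. apply Rmult_comm. unfold Rdiv; apply Rmult_comm.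
Qed.

Lemma Sx_zero x : x <= 1 -> Sx x = 0.
Proof.
  intro H. unfold Sx. rewrite swapR. 2: apply exbb.
  rewrite RInt_zero_open; auto. unfold Rdiv; ring.
  intros r Hr. apply (C2_zero bb C2_bb). lra.
Qed.

Lemma Sx_one x : 2 <= x -> Sx x = 1.
Proof.
  intro H. unfold Sx. rewrite <- (chasR bb 1 2 x); try apply exbb.
  rewrite (RInt_zero_open bb 2 x); auto. fold KK. rewrite Rplus_0_r. field. apply Rgt_not_eq, KK_pos.
  intros r Hr. apply (C2_zero bb C2_bb). lra.
Qed.

Definition Pc (f : R -> R) := exists c g, C2 g /\ forall x, f x = c * Sx x + g x.

Lemma Pc_deriv f : Pc f -> exists f', Pc f' /\ forall x, is_derive f x (f' x).
Proof.
  intros [c [g [Hg E]]]. destruct (C2_deriv g Hg) as [g' [Hg' Hd]].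
  exists (fun x => c * (bb x / KK) + g' x). split.
  - exists 0, (fun x => (c / KK) * bb x + g' x). split.
    apply C2_plus; auto. apply C2_scal, C2_bb. intro x. field. apply Rgt_not_eq, KK_pos.
  - intro x. apply (is_derive_ext (fun x => c * Sx x + g x)). intro; symmetry; auto.
    apply (is_derive_plus (fun x => c * Sx x) g). apply is_derive_scal, Sx_deriv. auto.
Qed.

Definition TT (c : R) (u : R -> R) := fun x => x * Derive u x + c * u x.

Lemma TT_C2 c u : C2 u -> C2 (TT c u).
Proof.
  intro Hu. destruct (C2_deriv u Hu) as [u' [Hu' Hd]].
  apply (C2_ext (fun x => x * u' x + c * u x)). apply C2_plus. apply C2_mult_t; auto. apply C2_scal; auto.
  intro t. unfold TT. rewrite (is_derive_unique _ _ _ (Hd t)). reflexivity.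
Qed.

Definition Iw (w u : R -> R) := RInt (fun x => w x * u x) 1 2.

Lemma mom_T (w w' : R -> R) c u : C2 u ->
  (forall x, 1 <= x <= 2 -> is_derive w x (w' x)) -> (forall x, 1 <= x <= 2 -> continuous w' x) ->
  Iw w (TT c u) = RInt (fun x => ((c - 1) * w x - x * w' x) * u x) 1 2.
Proof.
  intros Hu Hw Hw'. destruct (C2_deriv u Hu) as [u' [Hu' Hd]].
  assert (Hwc : forall x, 1 <= x <= 2 -> continuous w x).
  { intros x Hx. apply cder. eexists. apply Hw; auto. }
  pose proof (is_RInt_scal_derive (V := R_CompleteNormedModule) (fun x => x * w x) u (fun x => w x + x * w' x) u' 1 2) as H.
  rewrite Rmin_left in H by lra. rewrite Rmax_right in H by lra.
  assert (H1 : forall t, 1 <= t <= 2 -> is_derive (fun x => x * w x) t (w t + t * w' t)).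
  { intros t Ht. assert (Hid : is_derive (fun x : R => x) t 1) by (auto_derive; auto).
    pose proof (is_derive_mult (fun x => x) w t _ _ Hid (Hw t Ht) (fun a b => Rmult_comm a b)) as H3.
    apply (is_derive_R' _ _ _ _ _ H3). intro; reflexivity. unfold plus, mult; simpl. ring. }
  specialize (H H1 (fun t _ => Hd t)).
  assert (H2 : forall t, 1 <= t <= 2 -> continuous (fun x => w x + x * w' x) t).
  { intros t Ht. apply cplus. auto. apply cmul. apply cid. auto. }
  specialize (H H2 (fun t _ => C2_cont u' Hu' t)).
  apply Rint_val in H.
  rewrite (C2_zero u Hu 2), (C2_zero u Hu 1) in H by lra.
  unfold minus, plus, opp, scal in H; simpl in H; unfold mult in H; simpl in H.
  rewrite Rmult_0_r, Rmult_0_r, Ropp_0, Rplus_0_r in H.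
  unfold Iw, TT.
  rewrite (RInt_ext _ (fun x => 1 * ((w x + x * w' x) * u x + x * w x * u' x) + 1 * (((c - 1) * w x - x * w' x) * u x))).
  2:{ intros x Hx. rewrite Rmin_left in Hx by lra. rewrite Rmax_right in Hx by lra.
      rewrite (is_derive_unique _ _ _ (Hd x)). Rring. }
  rewrite RInt_lin2. rewrite H. Rring.
  - apply exR. intros z Hz. rewrite Rmin_left in Hz by lra. rewrite Rmax_right in Hz by lra.
    apply cplus. apply cmul. apply H2; auto. apply C2_cont; auto.
    apply cmul. apply cmul. apply cid. auto. apply C2_cont; auto.
  - apply exR. intros z Hz. rewrite Rmin_left in Hz by lra. rewrite Rmax_right in Hz by lra.
    apply cmul. apply cminus. apply cmul. apply cconst. auto. apply cmul. apply cid. auto. apply C2_cont; auto.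
Qed.

Definition w1 (x : R) := / x ^ 3.
Definition w2 (x : R) := x ^ 3.
Definition w3 (x : R) := x ^ 3 * ln x.

Lemma cln x : 0 < x -> continuous ln x.
Proof. intro H. apply cder. eexists. apply (is_derive_ln x H). Qed.

Lemma w1_cont x : 0 < x -> continuous w1 x.
Proof. intro H. unfold w1. apply cinv. apply cpow, cid. apply pow_nonzero; lra. Qed.
Lemma w2_cont x : continuous w2 x.
Proof. unfold w2. apply cpow, cid. Qed.
Lemma w3_cont x : 0 < x -> continuous w3 x.
Proof. intro H. unfold w3. apply cmul. apply cpow, cid. apply cln; auto. Qed.

Lemma exIw (w u : R -> R) : (forall x, 1 <= x <= 2 -> continuous w x) -> C2 u -> ex_RInt (fun x => w x * u x) 1 2.
Proof.
  intros Hw Hu. apply exR. intros z Hz. rewrite Rmin_left in Hz by lra. rewrite Rmax_right in Hz by lra.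
  apply cmul. auto. apply C2_cont; auto.
Qed.

Lemma RInt_scalR (f : R -> R) a b k : ex_RInt f a b -> RInt (fun x => k * f x) a b = k * RInt f a b.
Proof. intro H. apply (RInt_scal (V := R_CompleteNormedModule) f a b k H). Qed.

Lemma mom1 c u : C2 u -> Iw w1 (TT c u) = (c + 2) * Iw w1 u.
Proof.
  intro Hu. rewrite (mom_T w1 (fun x => -3 / x^4)); auto.
  - unfold Iw. rewrite <- RInt_scalR. apply RInt_ext. intros x Hx.
    rewrite Rmin_left in Hx by lra. rewrite Rmax_right in Hx by lra. unfold w1. Rfield. apply Rgt_not_eq; lra.
    apply exIw; auto. intros; apply w1_cont; lra.
  - intros x Hx. unfold w1. auto_derive. apply Rgt_not_eq. repeat apply Rmult_lt_0_compat; lra. field. apply Rgt_not_eq; lra.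
  - intros x Hx. apply cdiv. apply cconst. apply cpow, cid. apply pow_nonzero; lra.
Qed.

Lemma mom2 c u : C2 u -> Iw w2 (TT c u) = (c - 4) * Iw w2 u.
Proof.
  intro Hu. rewrite (mom_T w2 (fun x => 3 * x^2)); auto.
  - unfold Iw. rewrite <- RInt_scalR. apply RInt_ext. intros x Hx. unfold w2. Rring.
    apply exIw; auto. intros; apply w2_cont.
  - intros x Hx. unfold w2. auto_derive. auto. ring.
  - intros x Hx. apply cmul. apply cconst. apply cpow, cid.
Qed.

Lemma mom3 c u : C2 u -> Iw w3 (TT c u) = (c - 4) * Iw w3 u + (-1) * Iw w2 u.
Proof.
  intro Hu. rewrite (mom_T w3 (fun x => 3 * x^2 * ln x + x^2)); auto.
  - unfold Iw. rewrite <- RInt_lin2. apply RInt_ext. intros x Hx. unfold w3, w2. Rring.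
    apply exIw; auto. intros; apply w3_cont; lra.
    apply exIw; auto. intros; apply w2_cont.
  - intros x Hx. unfold w3. auto_derive. lra. field. apply Rgt_not_eq; lra.
  - intros x Hx. apply cplus. apply cmul. apply cmul. apply cconst. apply cpow, cid. apply cln; lra.
    apply cpow, cid.
Qed.

Definition phi1 := TT 4 (TT 4 bb).
Definition phi2 := TT 4 (TT (-2) bb).
Lemma C2_phi1 : C2 phi1.
Proof. apply TT_C2, TT_C2, C2_bb. Qed.
Lemma C2_phi2 : C2 phi2.
Proof. apply TT_C2, TT_C2, C2_bb. Qed.

Lemma phi1_m1 : Iw w1 phi1 = 36 * Iw w1 bb.
Proof. unfold phi1. rewrite mom1, mom1. Rring. apply C2_bb. apply TT_C2, C2_bb. Qed.
Lemma phi1_m2 : Iw w2 phi1 = 0.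
Proof. unfold phi1. rewrite mom2. Rring. apply TT_C2, C2_bb. Qed.
Lemma phi1_m3 : Iw w3 phi1 = 0.
Proof. unfold phi1. rewrite mom3, mom2. Rring. apply C2_bb. apply TT_C2, C2_bb. Qed.
Lemma phi2_m1 : Iw w1 phi2 = 0.
Proof. unfold phi2. rewrite mom1, mom1. Rring. apply C2_bb. apply TT_C2, C2_bb. Qed.
Lemma phi2_m2 : Iw w2 phi2 = 0.
Proof. unfold phi2. rewrite mom2. Rring. apply TT_C2, C2_bb. Qed.
Lemma phi2_m3 : Iw w3 phi2 = 6 * Iw w2 bb.
Proof. unfold phi2. rewrite mom3, mom2. Rring. apply C2_bb. apply TT_C2, C2_bb. Qed.

Lemma I1_pos : 0 < Iw w1 bb.
Proof.
  unfold Iw. apply RInt_gt_0. lra. intros x Hx. unfold w1. apply Rmult_lt_0_compat.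
  apply Rinv_0_lt_compat, pow_lt; lra. apply bb_pos; auto.
  intros x Hx. apply cmul. apply w1_cont; lra. apply bb_cont.
Qed.
Lemma I2_pos : 0 < Iw w2 bb.
Proof.
  unfold Iw. apply RInt_gt_0. lra. intros x Hx. unfold w2. apply Rmult_lt_0_compat.
  apply pow_lt; lra. apply bb_pos; auto.
  intros x Hx. apply cmul. apply w2_cont. apply bb_cont.
Qed.

Lemma RInt_lin4 (f1 f2 f3 f4 : R -> R) a b c1 c2 c3 c4 : a <= b ->
  (forall x, a <= x <= b -> continuous f1 x) -> (forall x, a <= x <= b -> continuous f2 x) ->
  (forall x, a <= x <= b -> continuous f3 x) -> (forall x, a <= x <= b -> continuous f4 x) ->
  RInt (fun x => c1 * f1 x + c2 * f2 x + c3 * f3 x + c4 * f4 x) a b =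
  c1 * RInt f1 a b + c2 * RInt f2 a b + c3 * RInt f3 a b + c4 * RInt f4 a b.
Proof.
  intros Hab H1 H2 H3 H4.
  assert (E : forall f : R -> R, (forall x, a <= x <= b -> continuous f x) -> @ex_RInt R_NormedModule f a b).
  { intros f Hf. apply exR. intros z Hz. rewrite Rmin_left in Hz by lra. rewrite Rmax_right in Hz by lra. auto. }
  rewrite (RInt_ext _ (fun x => 1 * (c1 * f1 x + c2 * f2 x) + 1 * (c3 * f3 x + c4 * f4 x))).
  2:{ intros; Rring. }
  rewrite RInt_lin2. rewrite !RInt_lin2; auto. Rring.
  apply E. intros x Hx. apply cplus; apply cmul; auto; apply cconst.
  apply E. intros x Hx. apply cplus; apply cmul; auto; apply cconst.
Qed.

Lemma Sx_cont x : continuous Sx x.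
Proof. apply cder. eexists. apply Sx_deriv. Qed.

Definition A1 := Iw w1 Sx.
Definition I1 := Iw w1 bb.
Definition I2 := Iw w2 bb.
Definition I3 := Iw w3 bb.
Definition A2 := RInt (fun x => x^3 * (1 - Sx x)) 1 2.
Definition A3 := RInt (fun x => x^3 * ln x * (1 - Sx x)) 1 2.
Definition L0 := RInt (fun x => x^3 * ln x) 0 1.
Definition gam := (1/4 + A2) / I2.
Definition bet := (L0 + A3 - gam * I3) / (6 * I2).
Definition alp := - (1/8 + A1 + gam * I1) / (36 * I1).

Definition chi0 (x : R) := Sx x + alp * phi1 x + bet * phi2 x + gam * bb x.

Lemma chi0_zero x : x <= 1 -> chi0 x = 0.
Proof.
  intro H. unfold chi0. rewrite Sx_zero by auto.
  rewrite (C2_zero phi1 C2_phi1), (C2_zero phi2 C2_phi2), (C2_zero bb C2_bb) by lra. ring.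
Qed.
Lemma chi0_one x : 2 <= x -> chi0 x = 1.
Proof.
  intro H. unfold chi0. rewrite Sx_one by auto.
  rewrite (C2_zero phi1 C2_phi1), (C2_zero phi2 C2_phi2), (C2_zero bb C2_bb) by lra. ring.
Qed.

Lemma chi0_Pc : Pc chi0.
Proof.
  exists 1, (fun x => alp * phi1 x + bet * phi2 x + gam * bb x). split.
  apply C2_plus. apply C2_plus. apply C2_scal, C2_phi1. apply C2_scal, C2_phi2. apply C2_scal, C2_bb.
  intro x. unfold chi0. ring.
Qed.

Lemma chi0_smooth n x : ex_derive_n chi0 n x.
Proof. apply (Dclosed_smooth Pc Pc_deriv chi0 chi0_Pc). Qed.

Lemma chi0_cont x : continuous chi0 x.
Proof. apply cder. destruct (Pc_deriv chi0 chi0_Pc) as [f' [_ H]]. eexists. apply H. Qed.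

Lemma lnlt x : 0 < x -> ln x < x.
Proof.
  intro H. pose proof (exp_ineq1 x ltac:(apply Rgt_not_eq; lra)).
  rewrite <- (ln_exp x) at 2. apply ln_increasing; lra.
Qed.

Lemma g3_cont x : 0 <= x -> continuous (fun x => x^3 * ln x) x.
Proof.
  intro Hx. destruct Hx as [Hx|Hx].
  - apply cmul. apply cpow, cid. apply cln; auto.
  - subst x. apply continuity_pt_filterlim.
    intros eps Heps. exists (Rmin 1 eps). split. apply Rmin_pos; lra.
    intros y [_ Hy]. unfold dist in *; simpl in *; unfold R_dist in *.
    rewrite Rminus_0_r in Hy. replace (0 * (0 * (0 * 1)) * ln 0) with 0 by ring. rewrite Rminus_0_r. replace (y * (y * (y * 1))) with (y^3) by ring.
    pose proof (Rmin_l 1 eps). pose proof (Rmin_r 1 eps).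
    destruct (Rlt_le_dec 0 y) as [Hp|Hn].
    + rewrite Rabs_pos_eq in Hy by lra.
      assert (Hl : ln y <= 0). { rewrite <- ln_1. apply ln_mono; lra. }
      assert (Hl2 : - ln y < / y). { rewrite <- ln_Rinv by lra. apply lnlt. apply Rinv_0_lt_compat; lra. }
      rewrite Rabs_mult, Rabs_pos_eq by (apply pow_le; lra). rewrite Rabs_left1 by lra.
      apply Rle_lt_trans with (y^3 * / y).
      apply Rmult_le_compat_l. apply pow_le; lra. lra.
      replace (y^3 * / y) with (y * y) by (field; apply Rgt_not_eq; lra). nra.
    + unfold ln. destruct (Rlt_dec 0 y) as [r|r]. exfalso. assert (HH : 0 < y) by exact r. lra. rewrite Rmult_0_r, Rabs_R0. lra.
Qed.

Lemma lim_ev_const (F : R -> R) B c : (forall b, B <= b -> F b = c) -> filterlim F (Rbar_locally p_infty) (locally c).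
Proof.
  intro H. apply (filterlim_ext_loc (fun _ => c)). exists B. intros; symmetry; apply H; lra.
  apply filterlim_const.
Qed.

Lemma I1_ne : I1 <> 0.
Proof. apply Rgt_not_eq, I1_pos. Qed.
Lemma I2_ne : I2 <> 0.
Proof. apply Rgt_not_eq, I2_pos. Qed.

Lemma c_f1 x : 0 < x -> continuous (fun x => chi0 x / x^3) x.
Proof. intro H. apply cdiv. apply chi0_cont. apply cpow, cid. apply pow_nonzero; lra. Qed.

Lemma moment1 : is_int_0_inf (fun x => chi0 x / x ^ 3) 0.
Proof.
  set (f1 := fun x => chi0 x / x ^ 3).
  assert (Hz : forall x, 0 < x < 1 -> f1 x = 0). { intros x Hx. unfold f1. rewrite chi0_zero by lra. unfold Rdiv; ring. }
  assert (Hex01 : ex_RInt f1 0 1) by (apply ex_RInt_zero_open; [lra|auto]).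
  assert (Hex1 : forall B, 1 <= B -> ex_RInt f1 1 B).
  { intros B HB. apply exR. intros z Hz'. rewrite Rmin_left in Hz' by lra. apply c_f1. lra. }
  assert (Hval : forall B, 2 <= B -> RInt f1 0 B = - / (2 * B^2)).
  { intros B HB.
    rewrite <- (chasR f1 0 1 B); auto. rewrite (RInt_zero_open f1 0 1); auto. 2: lra.
    rewrite <- (chasR f1 1 2 B). 2: apply Hex1; lra.
    2:{ apply exR. intros z Hz'. rewrite Rmin_left in Hz' by lra. apply c_f1. lra. }
    assert (E1 : RInt f1 1 2 = - / 8).
    { rewrite (RInt_ext _ (fun x => 1 * (w1 x * Sx x) + alp * (w1 x * phi1 x) + bet * (w1 x * phi2 x) + gam * (w1 x * bb x))).
      2:{ intros x Hx. rewrite Rmin_left in Hx by lra. unfold f1, chi0, w1. Rfield. apply Rgt_not_eq; lra. }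
      rewrite RInt_lin4. fold (Iw w1 Sx) (Iw w1 phi1) (Iw w1 phi2) (Iw w1 bb).
      rewrite phi1_m1, phi2_m1. fold A1 I1. unfold alp. Rfield. apply I1_ne. lra.
      intros x Hx. apply cmul. apply w1_cont; lra. apply Sx_cont.
      intros x Hx. apply cmul. apply w1_cont; lra. apply C2_cont, C2_phi1.
      intros x Hx. apply cmul. apply w1_cont; lra. apply C2_cont, C2_phi2.
      intros x Hx. apply cmul. apply w1_cont; lra. apply bb_cont. }
    assert (E2 : RInt f1 2 B = / 8 - / (2 * B^2)).
    { rewrite (RInt_ext _ (fun x => / x ^ 3)).
      2:{ intros x Hx. rewrite Rmin_left in Hx by lra. rewrite Rmax_right in Hx by lra. unfold f1. rewrite chi0_one by lra. Rfield.
          apply Rgt_not_eq; lra. }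
      apply Rint_val.
      replace (/ 8 - / (2 * B ^ 2)) with (minus ((fun x => - / (2 * x^2)) B) ((fun x => - / (2 * x^2)) 2)).
      2:{ unfold minus, plus, opp; simpl. field. apply Rgt_not_eq; lra. }
      apply (is_RInt_derive (V := R_CompleteNormedModule) (fun x => - / (2 * x^2))).
      - intros x Hx. rewrite Rmin_left in Hx by lra. rewrite Rmax_right in Hx by lra.
        assert (HH : is_derive (fun x => - / (2 * x^2)) x (/ x^3)).
        { auto_derive. apply Rgt_not_eq. assert (0 < x * (x * 1)) by (apply Rmult_lt_0_compat; lra). lra.
          field. apply Rgt_not_eq; lra. }
        exact HH.
      - intros x Hx. rewrite Rmin_left in Hx by lra. rewrite Rmax_right in Hx by lra.
        apply cinv. apply cpow, cid. apply pow_nonzero; lra. }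
    rewrite E1, E2. Rring. apply Hex1; lra. }
  apply lim_to_gen.
  - intros B HB. destruct (Rle_lt_dec B 1).
    + apply ex_RInt_zero_open; auto. intros; apply Hz; lra.
    + apply (ex_RInt_Chasles _ 0 1 B); auto. apply Hex1; lra.
  - apply (filterlim_ext_loc (fun B => - / (2 * B^2))).
    exists 2. intros B HB. symmetry. apply Hval. lra.
    apply (lim_zero _ (/ 2)). intros b Hb.
    rewrite Rabs_Ropp, Rabs_pos_eq. 2: apply Rlt_le, Rinv_0_lt_compat; nra.
    unfold Rdiv. rewrite <- Rinv_mult. apply Rinv_le_contravar. nra. simpl. nra.
Qed.

Lemma moment2 : is_int_0_inf (fun x => x ^ 3 * (1 - chi0 x)) 0.
Proof.
  set (f2 := fun x => x ^ 3 * (1 - chi0 x)).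
  assert (Hc : forall x, continuous f2 x).
  { intro x. apply cmul. apply cpow, cid. apply cminus. apply cconst. apply chi0_cont. }
  assert (Hex : forall a b, ex_RInt f2 a b) by (intros; apply exR; intros; apply Hc).
  apply lim_to_gen. intros; apply Hex.
  apply (lim_ev_const _ 2). intros B HB.
  rewrite <- (chasR f2 0 1 B); auto. rewrite <- (chasR f2 1 2 B); auto.
  rewrite (RInt_zero_open f2 2 B); auto. 2:{ intros r Hr. unfold f2. rewrite chi0_one by lra. ring. }
  assert (E0 : RInt f2 0 1 = / 4).
  { rewrite (RInt_ext _ (fun x => x^3)).
    2:{ intros x Hx. rewrite Rmin_left in Hx by lra. rewrite Rmax_right in Hx by lra. unfold f2. rewrite chi0_zero by lra. Rring. }
    apply Rint_val.
    replace (/ 4) with (minus ((fun x => x^4 / 4) 1) ((fun x => x^4 / 4) 0)).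
    2:{ unfold minus, plus, opp; simpl. field. }
    apply (is_RInt_derive (V := R_CompleteNormedModule) (fun x => x^4 / 4)).
    - intros x Hx. assert (HH : is_derive (fun x => x^4 / 4) x (x^3)) by (auto_derive; auto; field). exact HH.
    - intros x Hx. apply cpow, cid. }
  assert (E1 : RInt f2 1 2 = A2 - gam * I2).
  { rewrite (RInt_ext _ (fun x => 1 * (x^3 * (1 - Sx x)) + (- alp) * (w2 x * phi1 x) + (- bet) * (w2 x * phi2 x) + (- gam) * (w2 x * bb x))).
    2:{ intros x Hx. unfold f2, chi0, w2. Rring. }
    rewrite RInt_lin4. fold A2. fold (Iw w2 phi1) (Iw w2 phi2) (Iw w2 bb).
    rewrite phi1_m2, phi2_m2. fold I2. Rring. lra.
    intros x Hx. apply cmul. apply cpow, cid. apply cminus. apply cconst. apply Sx_cont.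
    intros x Hx. apply cmul. apply w2_cont. apply C2_cont, C2_phi1.
    intros x Hx. apply cmul. apply w2_cont. apply C2_cont, C2_phi2.
    intros x Hx. apply cmul. apply w2_cont. apply bb_cont. }
  rewrite E0, E1. unfold gam. Rfield. apply I2_ne.
Qed.

Lemma moment3 : is_int_0_inf (fun x => x ^ 3 * ln x * (1 - chi0 x)) 0.
Proof.
  set (f3 := fun x => x ^ 3 * ln x * (1 - chi0 x)).
  assert (Hc : forall x, 0 < x -> continuous f3 x).
  { intros x Hx. apply cmul. apply cmul. apply cpow, cid. apply cln; auto. apply cminus. apply cconst. apply chi0_cont. }
  assert (Heq : forall x, x < 1 -> f3 x = x^3 * ln x).
  { intros x Hx. unfold f3. rewrite chi0_zero by lra. ring. }
  assert (Hex0 : forall B, 0 <= B <= 1 -> ex_RInt f3 0 B).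
  { intros B HB. apply (ex_RInt_ext (fun x => x^3 * ln x)).
    intros x Hx. rewrite Rmin_left in Hx by lra. rewrite Rmax_right in Hx by lra. symmetry. apply Heq. lra.
    apply exR. intros z Hz. rewrite Rmin_left in Hz by lra. rewrite Rmax_right in Hz by lra. apply g3_cont. lra. }
  assert (Hex1 : forall a b, 1 <= a -> 1 <= b -> ex_RInt f3 a b).
  { intros a b Ha Hb. apply exR. intros z Hz. apply Hc.
    destruct (Rle_lt_dec a b); [rewrite Rmin_left in Hz|rewrite Rmin_right in Hz]; lra. }
  apply lim_to_gen.
  - intros B HB. destruct (Rle_lt_dec B 1). apply Hex0; lra.
    apply (ex_RInt_Chasles _ 0 1 B). apply Hex0; lra. apply Hex1; lra.
  - apply (lim_ev_const _ 2). intros B HB.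
    rewrite <- (chasR f3 0 1 B). 2: apply Hex0; lra. 2: apply Hex1; lra.
    rewrite <- (chasR f3 1 2 B). 2: apply Hex1; lra. 2: apply Hex1; lra.
    rewrite (RInt_zero_open f3 2 B); auto. 2:{ intros r Hr. unfold f3. rewrite chi0_one by lra. ring. }
    assert (E0 : RInt f3 0 1 = L0).
    { unfold L0. apply RInt_ext. intros x Hx. rewrite Rmin_left in Hx by lra. rewrite Rmax_right in Hx by lra. apply Heq. lra. }
    assert (E1 : RInt f3 1 2 = A3 - bet * (6 * I2) - gam * I3).
    { rewrite (RInt_ext _ (fun x => 1 * (x^3 * ln x * (1 - Sx x)) + (- alp) * (w3 x * phi1 x) + (- bet) * (w3 x * phi2 x) + (- gam) * (w3 x * bb x))).
      2:{ intros x Hx. unfold f3, chi0, w3. Rring. }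
      rewrite RInt_lin4. fold A3. fold (Iw w3 phi1) (Iw w3 phi2) (Iw w3 bb).
      rewrite phi1_m3, phi2_m3. fold I2 I3. Rring. lra.
      intros x Hx. apply cmul. apply cmul. apply cpow, cid. apply cln; lra. apply cminus. apply cconst. apply Sx_cont.
      intros x Hx. apply cmul. apply w3_cont; lra. apply C2_cont, C2_phi1.
      intros x Hx. apply cmul. apply w3_cont; lra. apply C2_cont, C2_phi2.
      intros x Hx. apply cmul. apply w3_cont; lra. apply bb_cont. }
    rewrite E0, E1. unfold bet. Rfield. apply I2_ne.
Qed.

Lemma chi0_adm : admissible_cutoff chi0.
Proof.
  split. intros n x _. apply chi0_smooth.
  split. intros x Hx. apply chi0_zero; lra.
  split. intros x Hx. apply chi0_one; lra.
  split. apply moment1.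
  split. apply moment2.
  apply moment3.
Qed.


Theorem lemma4p28 :
  (exists chi : R -> R, admissible_cutoff chi) /\
  (forall chi : R -> R, admissible_cutoff chi ->
     (forall eta, 0 < eta -> ex_int_0_inf (fun r => J1 (r * eta) * (chi r / r ^ 5) * r)) /\
     (exists C, 0 < C /\
        forall eta, 0 < eta < 1 ->
          Rabs (hankel1 (fun r => chi r / r ^ 5) eta) <= C * eta ^ 3 * jbr (ln eta)) /\
     (forall k : nat, exists Ck, 0 < Ck /\
        forall eta, 1 <= eta ->
          Rabs (hankel1 (fun r => chi r / r ^ 5) eta) <= Ck / eta ^ k)).
Proof.
  split.
  - exists chi0. apply chi0_adm.
  - intros chi Hc. apply part2. exact Hc.
Qed.
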